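(* Let $d>0$, let $J$ satisfy (J) and (J2), and let $f$ satisfy (f3); let $c_*>0$ be the minimal traveling wave speed described in the context. Fix $\sigma\in(0,1)$ and $c\in(0,c_* )$, and let $M$, $\tilde f$, $a$, $A$ and $\phi_*^\sigma$ be as in the context. Then the pointwise limit $\phi_\sigma(x):=\lim_{n\to\infty}A^n[\phi_*^\sigma](x)$ exists for every $x\in\mathbb{R}$, and $\phi=\phi_\sigma$ is a solution of $$d\int_{-\infty}^{+\infty}J(x-y)\phi(y)\,dy-d\phi(x)+c\phi'(x)+f(\phi(x))=0\ \ (-\infty<x<0),\qquad \phi(-\infty)=1,\quad \phi(x)=\sigma\ \ (0\le x<+\infty),$$ with $\phi_\sigma$ continuously differentiable on $(-\infty,0)$ and $0\le\phi_\sigma\le1$.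
   Context: Condition (J): $J\in C(\mathbb{R})\cap L^\infty(\mathbb{R})$, $J\ge 0$, $J(0)>0$, $\int_{\mathbb{R}}J=1$, $J$ even. Condition (J2): there exists $\lambda>0$ with $\int_{\mathbb{R}}J(x)e^{\lambda x}dx<\infty$. Condition (f3): $f\in C^1([0,\infty))$, $f(0)=f(1)=0$, $f>0$ in $(0,1)$, $f'(0)>0>f'(1)$, $f(u)/u$ nonincreasing in $u>0$. Known fact (minimal speed): under (J), (J2), (f3) there is $c_*>0$ such that the problem $d\int_{\mathbb{R}}J(x-y)\phi(y)dy-d\phi(x)+c\phi'(x)+f(\phi(x))=0$ on $\mathbb{R}$, $\phi(-\infty)=1$, $\phi(+\infty)=0$, has a nonincreasing solution $\phi\in L^\infty(\mathbb{R})$ if and only if $c\ge c_*$; such solutions are $C^1$. Construction: choose $M>0$ such that $\tilde f(u):=(cM-d)u+f(u)$ is increasing on $[0,1]$; let $a(x)=\int_{-\infty}^xJ(y)dy$. On $\Omega=\{\phi\in C(\mathbb{R}):0\le\phi\le1\}$ define $A[\phi](x)=\sigma$ for $x\ge0$ and, for $x<0$, $$A[\phi](x)=e^{Mx}\sigma+\frac{e^{Mx}}{c}\int_x^0e^{-M\xi}\Big[d\int_{-\infty}^0J(\xi-y)\phi(y)dy+d\sigma a(\xi)+\tilde f(\phi(\xi))\Big]d\xi.$$ Let $\phi_*$ be a nonincreasing traveling wave solution with speed $c_*$ (as in the known fact), translated so that $\phi_*(0)=\sigma$, and set $\phi_*^\sigma(x)=\max\{\phi_*(x),\sigma\}$ (so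 $\phi_*^\sigma=\phi_*$ on $(-\infty,0)$ and $=\sigma$ on $[0,\infty)$). *)

(* Defs.v *)
From Stdlib Require Import Reals.
From Coquelicot Require Import Coquelicot.
Open Scope R_scope.

Definition int_R (g : R -> R) : R :=
  RInt_gen g (Rbar_locally m_infty) (Rbar_locally p_infty).
Definition ex_int_R (g : R -> R) : Prop :=
  ex_RInt_gen g (Rbar_locally m_infty) (Rbar_locally p_infty).
Definition int_minf (g : R -> R) (x : R) : R :=
  RInt_gen g (Rbar_locally m_infty) (at_point x).

Definition cond_J (J : R -> R) : Prop :=
  (forall x, continuous J x) /\
  (exists B, forall x, Rabs (J x) <= B) /\
  (forall x, 0 <= J x) /\
  0 < J 0 /\
  is_RInt_gen J (Rbar_locally m_infty) (Rbar_locally p_infty) 1 /\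
  (forall x, J (- x) = J x).

Definition cond_J2 (J : R -> R) : Prop :=
  exists lam, 0 < lam /\ ex_int_R (fun x => J x * exp (lam * x)).

(* f in C^1([0,oo)): a derivative g on (0,oo), one-sided derivative at 0,
   g continuous on [0,oo) (right-continuous at 0). *)
Definition C1_nonneg (f g : R -> R) : Prop :=
  (forall x, 0 < x -> is_derive f x (g x)) /\
  filterlim (fun h => (f h - f 0) / h) (at_right 0) (locally (g 0)) /\
  (forall x, 0 < x -> continuous g x) /\
  filterlim g (at_right 0) (locally (g 0)).

Definition cond_f3 (f : R -> R) : Prop :=
  exists g, C1_nonneg f g /\
  f 0 = 0 /\ f 1 = 0 /\
  (forall u, 0 < u < 1 -> 0 < f u) /\
  g 0 > 0 /\ 0 > g 1 /\
  (forall u v, 0 < u -> u <= v -> f v / v <= f u / u).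

Definition tw_solution (d : R) (J f : R -> R) (c : R) (phi : R -> R) : Prop :=
  (exists B, forall x, Rabs (phi x) <= B) /\
  (forall x y, x <= y -> phi y <= phi x) /\
  (forall x, ex_derive phi x) /\
  (forall x, ex_int_R (fun y => J (x - y) * phi y)) /\
  (forall x, d * int_R (fun y => J (x - y) * phi y) - d * phi x
             + c * Derive phi x + f (phi x) = 0) /\
  is_lim phi m_infty 1 /\ is_lim phi p_infty 0.

Definition minimal_speed (d : R) (J f : R -> R) (cstar : R) : Prop :=
  forall c, 0 < c -> ((exists phi, tw_solution d J f c phi) <-> cstar <= c).

Definition ftilde (f : R -> R) (c M d : R) (u : R) : R := (c * M - d) * u + f u.

Definition a_fun (J : R -> R) (x : R) : R := int_minf J x.

(* The operator A (defined for all phi : R -> R; used on Omega). *)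
Definition A_op (d : R) (J f : R -> R) (c M sigma : R) (phi : R -> R) (x : R) : R :=
  if Rle_dec 0 x then sigma
  else exp (M * x) * sigma
       + exp (M * x) / c *
         RInt (fun xi => exp (- M * xi) *
                 (d * int_minf (fun y => J (xi - y) * phi y) 0
                  + d * sigma * a_fun J xi
                  + ftilde f c M d (phi xi))) x 0.

Definition phi_sigma_init (phistar : R -> R) (sigma : R) (x : R) : R :=
  Rmax (phistar x) sigma.

(* Main.v *)
Require Import Defs.
From Stdlib Require Import Reals Lra Lia.
From Coquelicot Require Import Coquelicot.
Open Scope R_scope.


Lemma ball_R (x e y : R) : ball x e y <-> Rabs (y - x) < e.
Proof. split; intro H; exact H. Qed.

Lemma gen_left_approx (g : R -> R) (b l : R) :
  is_RInt_gen g (Rbar_locally m_infty) (at_point b) l ->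
  (forall a, ex_RInt g a b) ->
  forall eps, 0 < eps -> exists M0, forall a, a < M0 -> Rabs (RInt g a b - l) < eps.
Proof.
  intros H Hex eps Heps.
  destruct (H (ball l (mkposreal eps Heps)) (locally_ball _ _)) as [Q R HQ HR HP].
  destruct HQ as [M0 HM0]. exists M0. intros a Ha.
  destruct (HP a b (HM0 a Ha) HR) as [y [Hy Hb]].
  simpl in Hy. rewrite (is_RInt_unique _ _ _ _ Hy). apply ball_R in Hb. exact Hb.
Qed.

Lemma gen_right_approx (g : R -> R) (b l : R) :
  is_RInt_gen g (at_point b) (Rbar_locally p_infty) l ->
  (forall a, ex_RInt g b a) ->
  forall eps, 0 < eps -> exists M0, forall a, M0 < a -> Rabs (RInt g b a - l) < eps.
Proof.
  intros H Hex eps Heps.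
  destruct (H (ball l (mkposreal eps Heps)) (locally_ball _ _)) as [Q R HQ HR HP].
  destruct HR as [M0 HM0]. exists M0. intros a Ha.
  destruct (HP b a HQ (HM0 a Ha)) as [y [Hy Hb]].
  simpl in Hy. rewrite (is_RInt_unique _ _ _ _ Hy). apply ball_R in Hb. exact Hb.
Qed.

Lemma gen_mp_approx (g : R -> R) (l : R) :
  is_RInt_gen g (Rbar_locally m_infty) (Rbar_locally p_infty) l ->
  (forall a b, ex_RInt g a b) ->
  forall eps, 0 < eps -> exists M1 M2, forall a b, a < M1 -> M2 < b ->
     Rabs (RInt g a b - l) < eps.
Proof.
  intros H Hex eps Heps.
  destruct (H (ball l (mkposreal eps Heps)) (locally_ball _ _)) as [Q R HQ HR HP].
  destruct HQ as [M1 HM1]. destruct HR as [M2 HM2]. exists M1, M2. intros a b Ha Hb.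
  destruct (HP a b (HM1 a Ha) (HM2 b Hb)) as [y [Hy Hb']].
  simpl in Hy. rewrite (is_RInt_unique _ _ _ _ Hy). apply ball_R in Hb'. exact Hb'.
Qed.

Lemma gen_left_intro (g : R -> R) (b l : R) :
  (forall a, ex_RInt g a b) ->
  (forall eps, 0 < eps -> exists M0, forall a, a < M0 -> Rabs (RInt g a b - l) < eps) ->
  is_RInt_gen g (Rbar_locally m_infty) (at_point b) l.
Proof.
  intros Hex H P [eps HP].
  destruct (H eps (cond_pos eps)) as [M0 HM0].
  apply Filter_prod with (fun a => a < M0) (fun x => x = b).
  - exists M0. auto.
  - reflexivity.
  - intros x y Hx Hy. simpl. subst y. exists (RInt g x b). split.
    + exact (RInt_correct g _ _ (Hex _)).
    + apply HP. apply ball_R. auto.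
Qed.

Lemma gen_right_intro (g : R -> R) (b l : R) :
  (forall a, ex_RInt g b a) ->
  (forall eps, 0 < eps -> exists M0, forall a, M0 < a -> Rabs (RInt g b a - l) < eps) ->
  is_RInt_gen g (at_point b) (Rbar_locally p_infty) l.
Proof.
  intros Hex H P [eps HP].
  destruct (H eps (cond_pos eps)) as [M0 HM0].
  apply Filter_prod with (fun x => x = b) (fun a => M0 < a).
  - reflexivity.
  - exists M0. auto.
  - intros x y Hx Hy. simpl. subst x. exists (RInt g b y). split.
    + exact (RInt_correct g _ _ (Hex _)).
    + apply HP. apply ball_R. auto.
Qed.

Lemma gen_left_exists (g : R -> R) (b C : R) :
  (forall a, ex_RInt g a b) -> (forall x, 0 <= g x) ->
  (forall a, a <= b -> RInt g a b <= C) ->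
  exists l, is_RInt_gen g (Rbar_locally m_infty) (at_point b) l.
Proof.
  intros Hex Hpos Hb.
  set (E := fun v => exists a, a <= b /\ v = RInt g a b).
  assert (HE : bound E) by (exists C; intros v [a [Ha ->]]; auto).
  assert (HE2 : exists v, E v) by (exists (RInt g b b); exists b; split; [lra|auto]).
  destruct (completeness E HE HE2) as [l [Hub Hlub]].
  exists l. apply gen_left_intro; auto.
  intros eps Heps.
  assert (exists a0, a0 <= b /\ l - eps < RInt g a0 b) as [a0 [Ha0 Hv]].
  { apply Classical_Prop.NNPP. intro Hn.
    assert (l <= l - eps); [|lra].
    apply Hlub. intros v [a [Ha ->]].
    apply Rnot_lt_le. intro. apply Hn. exists a. auto. }
  exists a0. intros a Ha.
  assert (RInt g a b <= l) by (apply Hub; exists a; split; lra).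
  assert (RInt g a0 b <= RInt g a b).
  { rewrite <- (RInt_Chasles g a a0 b); auto.
    - assert (0 <= RInt g a a0).
      { apply RInt_ge_0; [lra| |intros; auto].
        apply ex_RInt_Chasles with b; auto. apply ex_RInt_swap; auto. }
      simpl. change plus with Rplus. lra.
    - apply ex_RInt_Chasles with b; auto. apply ex_RInt_swap; auto. }
  apply Rabs_lt_between'. lra.
Qed.


Definition JH (J : R -> R) (B : R) :=
  (forall x, continuous J x) /\ (forall x, 0 <= J x <= B) /\
  is_RInt_gen J (Rbar_locally m_infty) (Rbar_locally p_infty) 1.

Lemma J_ex (J : R -> R) B : JH J B -> forall a b, ex_RInt J a b.
Proof. intros [Hc _] a b. apply (@ex_RInt_continuous R_CompleteNormedModule). auto. Qed.

Lemma RInt_Chasles_R (g : R -> R) a b c :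
  ex_RInt g a b -> ex_RInt g b c -> RInt g a c = RInt g a b + RInt g b c.
Proof. intros. rewrite <- (RInt_Chasles g a b c); auto. Qed.

Lemma J_ge0 J B : JH J B -> forall a b, a <= b -> 0 <= RInt J a b.
Proof.
  intros HJ a b Hab. apply RInt_ge_0; auto. apply (J_ex J B HJ).
  intros. destruct HJ as [_ [HH _]]. apply HH.
Qed.

Lemma J_le1 J B : JH J B -> forall a b, a <= b -> RInt J a b <= 1.
Proof.
  intros HJ a b Hab.
  apply Rnot_lt_le. intro Hlt.
  set (e := RInt J a b - 1).
  assert (He : 0 < e) by (unfold e; lra).
  destruct HJ as [Hc [Hp Hg]].
  destruct (gen_mp_approx J 1 Hg (J_ex J B (conj Hc (conj Hp Hg))) e He) as [M1 [M2 HM]].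
  set (a' := Rmin a (M1 - 1)). set (b' := Rmax b (M2 + 1)).
  assert (Ha' : a' <= a) by apply Rmin_l.
  assert (Hb' : b <= b') by apply Rmax_l.
  assert (H1 := HM a' b' ltac:(unfold a'; generalize (Rmin_r a (M1-1)); lra)
                       ltac:(unfold b'; generalize (Rmax_r b (M2+1)); lra)).
  assert (HJ : JH J B) by (split; auto).
  assert (E1 : @eq R (RInt J a' b') (RInt J a' a + RInt J a b + RInt J b b')).
  { rewrite (RInt_Chasles_R J a' a b'); try apply (J_ex J B HJ).
    rewrite (RInt_Chasles_R J a b b'); try apply (J_ex J B HJ). ring. }
  assert (0 <= RInt J a' a) by (apply (J_ge0 J B HJ); auto).
  assert (0 <= RInt J b b') by (apply (J_ge0 J B HJ); auto).
  apply Rabs_lt_between' in H1. unfold e in *. lra.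
Qed.

Lemma J_right_tail J B : JH J B -> forall eps, 0 < eps ->
  exists T, forall b b', T <= b -> b <= b' -> RInt J b b' <= eps.
Proof.
  intros HJ eps Heps.
  pose proof HJ as [Hc [Hp Hg]].
  destruct (gen_mp_approx J 1 Hg (J_ex J B HJ) eps Heps) as [M1 [M2 HM]].
  exists (M2 + 1). intros b b' Hb Hbb.
  set (a0 := Rmin (M1 - 1) b).
  assert (Ha0 : a0 <= M1 - 1 /\ a0 <= b) by (split; [apply Rmin_l|apply Rmin_r]).
  assert (H1 := HM a0 b ltac:(lra) ltac:(lra)).
  assert (H2 := J_le1 J B HJ a0 b' ltac:(lra)).
  rewrite (RInt_Chasles_R J a0 b b') in H2; try apply (J_ex J B HJ).
  apply Rabs_lt_between' in H1. lra.
Qed.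

Lemma exRInt_cont (g : R -> R) : (forall x, continuous g x) -> forall a b, ex_RInt g a b.
Proof. intros Hc a b. apply (@ex_RInt_continuous R_CompleteNormedModule). auto. Qed.

Lemma RInt_reflect (g : R -> R) xi p q : (forall x, continuous g x) ->
  RInt (fun y => g (xi - y)) p q = RInt g (xi - q) (xi - p).
Proof.
  intros Hc. apply is_RInt_unique.
  assert (H0 : is_RInt g (-1*p+xi) (-1*q+xi) (RInt g (-1*p+xi) (-1*q+xi)))
    by (apply (RInt_correct g); apply exRInt_cont; auto).
  assert (H1 := is_RInt_comp_lin _ _ _ _ _ _ H0).
  assert (H2 := is_RInt_scal _ _ _ (-1) _ H1).
  replace (RInt g (xi - q) (xi - p)) with (scal (-1) (RInt g (-1*p+xi) (-1*q+xi))).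
  - apply is_RInt_ext with (2 := H2). intros x _.
    unfold scal; simpl; unfold mult; simpl. replace (-1*x+xi) with (xi - x) by ring. ring.
  - rewrite <- (opp_RInt_swap g) by (apply exRInt_cont; auto).
    unfold scal, opp; simpl; unfold mult; simpl.
    replace (-1*p+xi) with (xi - p) by ring. replace (-1*q+xi) with (xi - q) by ring. ring.
Qed.

Lemma RInt_transl (g : R -> R) h p q : (forall x, continuous g x) ->
  RInt (fun y => g (y + h)) p q = RInt g (p + h) (q + h).
Proof.
  intros Hc. apply is_RInt_unique.
  assert (H0 : is_RInt g (1*p+h) (1*q+h) (RInt g (1*p+h) (1*q+h)))
    by (apply (RInt_correct g); apply exRInt_cont; auto).
  assert (H1 := is_RInt_comp_lin _ _ _ _ _ _ H0).
  replace (p + h) with (1*p+h) by ring. replace (q + h) with (1*q+h) by ring.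
  apply is_RInt_ext with (2 := H1). intros x _.
  unfold scal; simpl; unfold mult; simpl. replace (1*x+h) with (x + h) by ring. ring.
Qed.

Lemma J_shift J B : JH J B -> forall xi p q,
  RInt (fun y => J (xi - y)) p q = RInt J (xi - q) (xi - p).
Proof. intros HJ xi p q. apply RInt_reflect. apply HJ. Qed.


Lemma f_ratio_bound (f : R -> R) : cond_f3 f ->
  exists g0, 0 <= g0 /\ forall u, 0 < u -> f u / u <= g0.
Proof.
  intros [g [[_ [Hlim _]] [Hf0 [_ [_ [Hg0 [_ Hrat]]]]]]].
  exists (g 0). split; [lra|]. intros u Hu.
  apply Rnot_lt_le. intro Hlt.
  set (eps := f u / u - g 0).
  assert (He : 0 < eps) by (unfold eps; lra).
  destruct (Hlim (ball (g 0) (mkposreal eps He)) (locally_ball _ _)) as [del Hdel].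
  set (y := Rmin (del / 2) u).
  assert (Hy1 : 0 < y) by (unfold y; apply Rmin_pos; [generalize (cond_pos del); lra|lra]).
  assert (Hy2 : y <= u) by apply Rmin_r.
  assert (Hy3 : y <= del/2) by apply Rmin_l.
  assert (Hb : ball 0 del y).
  { apply ball_R. rewrite Rminus_0_r, Rabs_right by lra. generalize (cond_pos del). lra. }
  specialize (Hdel y Hb Hy1). apply ball_R in Hdel. simpl in Hdel.
  rewrite Hf0, Rminus_0_r in Hdel.
  specialize (Hrat y u Hy1 Hy2).
  apply Rabs_lt_between' in Hdel. unfold eps in *. lra.
Qed.

Lemma ftilde_props (f : R -> R) (c M d : R) : cond_f3 f ->
  (forall u v, 0 <= u -> u < v -> v <= 1 -> ftilde f c M d u < ftilde f c M d v) ->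
  exists K, 0 <= K /\
   (forall u v, 0 <= u -> u <= v -> v <= 1 ->
      0 <= ftilde f c M d v - ftilde f c M d u <= K * (v - u)) /\
   ftilde f c M d 0 = 0 /\ ftilde f c M d 1 = c * M - d.
Proof.
  intros Hf Hmono.
  destruct (f_ratio_bound f Hf) as [g0 [Hg0 Hr]].
  destruct Hf as [g [_ [Hf0 [Hf1 [_ [_ [_ Hrat]]]]]]].
  exists (Rabs (c * M - d) + g0). split.
  { generalize (Rabs_pos (c*M-d)). lra. }
  split; [|unfold ftilde; rewrite Hf0, Hf1; split; ring].
  intros u v Hu Huv Hv. split.
  - destruct (Rle_lt_or_eq_dec u v Huv) as [Hl|He].
    + generalize (Hmono u v Hu Hl Hv). lra.
    + subst. lra.
  - unfold ftilde.
    assert (Hfv : f v - f u <= g0 * (v - u)).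
    { destruct (Rle_lt_or_eq_dec 0 u Hu) as [Hu0|Hu0].
      - specialize (Hrat u v Hu0 Huv). specialize (Hr u Hu0).
        assert (f v <= v * (f u / u)).
        { apply (Rmult_le_compat_r v) in Hrat; [|lra].
          replace (f v / v * v) with (f v) in Hrat by (field; lra). lra. }
        assert (v * (f u / u) - f u = (v - u) * (f u / u)) by (field; lra).
        assert ((v - u) * (f u / u) <= (v - u) * g0) by (apply Rmult_le_compat_l; lra).
        lra.
      - subst u. rewrite Hf0.
        destruct (Rle_lt_or_eq_dec 0 v Huv) as [Hv0|Hv0].
        + specialize (Hr v Hv0).
          replace (f v) with (v * (f v / v)) by (field; lra).
          assert (v * (f v / v) <= v * g0) by (apply Rmult_le_compat_l; lra). lra.
        + subst v. rewrite Hf0. lra. }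
    assert ((c*M-d)*(v-u) <= Rabs (c*M-d) * (v - u)).
    { apply Rmult_le_compat_r; [lra| apply Rle_abs]. }
    lra.
Qed.


Lemma cont_pt (f : R -> R) x : continuous f x <-> continuity_pt f x.
Proof. symmetry. apply continuity_pt_filterlim. Qed.

Lemma cont_mult (f g : R -> R) x : continuous f x -> continuous g x ->
  continuous (fun y => f y * g y) x.
Proof. rewrite !cont_pt. intros. apply continuity_pt_mult; auto. Qed.
Lemma cont_plus (f g : R -> R) x : continuous f x -> continuous g x ->
  continuous (fun y => f y + g y) x.
Proof. rewrite !cont_pt. intros. apply continuity_pt_plus; auto. Qed.
Lemma cont_minus (f g : R -> R) x : continuous f x -> continuous g x ->
  continuous (fun y => f y - g y) x.
Proof. rewrite !cont_pt. intros. apply continuity_pt_minus; auto. Qed.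
Lemma cont_const (k : R) x : continuous (fun _ : R => k) x.
Proof. rewrite cont_pt. apply continuity_pt_const. intros a b; auto. Qed.
Lemma cont_id x : continuous (fun y : R => y) x.
Proof. rewrite cont_pt. apply continuity_pt_id. Qed.
Lemma cont_comp (f g : R -> R) x : continuous f x -> continuous g (f x) ->
  continuous (fun y => g (f y)) x.
Proof. rewrite !cont_pt. intros. apply (continuity_pt_comp f g); auto. Qed.
Lemma cont_exp (k : R) x : continuous (fun y => exp (k * y)) x.
Proof.
  rewrite cont_pt. apply (continuity_pt_comp (fun y => k * y) exp).
  - apply continuity_pt_mult. apply continuity_pt_const. intros a b; auto. apply continuity_pt_id.
  - apply derivable_continuous_pt. apply derivable_pt_exp.
Qed.

Lemma lip_cont (phi : R -> R) L : (forall x y, Rabs (phi x - phi y) <= L * Rabs (x - y)) ->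
  forall x, continuous phi x.
Proof.
  intros HL x. apply filterlim_locally. intros eps.
  assert (Hp : 0 < eps / (Rabs L + 1)).
  { apply Rdiv_lt_0_compat. apply cond_pos. generalize (Rabs_pos L); lra. }
  exists (mkposreal _ Hp). intros y Hy. apply ball_R.
  assert (Hy' : Rabs (y - x) < eps / (Rabs L + 1)) by exact Hy.
  eapply Rle_lt_trans. apply HL.
  apply Rle_lt_trans with (Rabs L * Rabs (y - x)).
  { apply Rmult_le_compat_r. apply Rabs_pos. apply Rle_abs. }
  apply Rle_lt_trans with (Rabs L * (eps / (Rabs L + 1))).
  { apply Rmult_le_compat_l. apply Rabs_pos. lra. }
  assert (0 <= Rabs L) by apply Rabs_pos.
  generalize (cond_pos eps); intro.
  set (t := eps / (Rabs L + 1)) in *.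
  assert (Ht : pos eps = t * (Rabs L + 1)) by (unfold t; field; lra).
  nra.
Qed.

Lemma le_eps (x y : R) : (forall eps, 0 < eps -> x <= y + eps) -> x <= y.
Proof.
  intros H. apply Rnot_lt_le. intro Hlt.
  specialize (H ((x - y)/2) ltac:(lra)). lra.
Qed.

Lemma gen_left_le (g : R -> R) b l C :
  is_RInt_gen g (Rbar_locally m_infty) (at_point b) l -> (forall a, ex_RInt g a b) ->
  (exists a0, forall a, a < a0 -> RInt g a b <= C) -> l <= C.
Proof.
  intros Hg Hex [a0 Ha0]. apply le_eps. intros eps Heps.
  destruct (gen_left_approx g b l Hg Hex eps Heps) as [M1 HM1].
  set (a := Rmin M1 a0 - 1).
  assert (a < M1 /\ a < a0) by (unfold a; generalize (Rmin_l M1 a0) (Rmin_r M1 a0); lra).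
  specialize (HM1 a ltac:(lra)). specialize (Ha0 a ltac:(lra)).
  apply Rabs_lt_between' in HM1. lra.
Qed.

Lemma gen_left_ge (g : R -> R) b l C :
  is_RInt_gen g (Rbar_locally m_infty) (at_point b) l -> (forall a, ex_RInt g a b) ->
  (exists a0, forall a, a < a0 -> C <= RInt g a b) -> C <= l.
Proof.
  intros Hg Hex [a0 Ha0]. apply le_eps. intros eps Heps.
  destruct (gen_left_approx g b l Hg Hex eps Heps) as [M1 HM1].
  set (a := Rmin M1 a0 - 1).
  assert (a < M1 /\ a < a0) by (unfold a; generalize (Rmin_l M1 a0) (Rmin_r M1 a0); lra).
  specialize (HM1 a ltac:(lra)). specialize (Ha0 a ltac:(lra)).
  apply Rabs_lt_between' in HM1. lra.
Qed.

Lemma gen_left_diff (g1 g2 : R -> R) b1 b2 l1 l2 s C :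
  is_RInt_gen g1 (Rbar_locally m_infty) (at_point b1) l1 ->
  is_RInt_gen g2 (Rbar_locally m_infty) (at_point b2) l2 ->
  (forall a, ex_RInt g1 a b1) -> (forall a, ex_RInt g2 a b2) ->
  (exists a0, forall a, a < a0 -> RInt g1 a b1 - RInt g2 (a + s) b2 <= C) -> l1 - l2 <= C.
Proof.
  intros Hg1 Hg2 Hex1 Hex2 [a0 Ha0]. apply le_eps. intros eps Heps.
  destruct (gen_left_approx g1 b1 l1 Hg1 Hex1 (eps/2) ltac:(lra)) as [M1 HM1].
  destruct (gen_left_approx g2 b2 l2 Hg2 Hex2 (eps/2) ltac:(lra)) as [M2 HM2].
  set (a := Rmin (Rmin M1 (M2 - s)) a0 - 1).
  assert (a < M1 /\ a < M2 - s /\ a < a0).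
  { unfold a; generalize (Rmin_l (Rmin M1 (M2 - s)) a0) (Rmin_r (Rmin M1 (M2 - s)) a0)
     (Rmin_l M1 (M2 - s)) (Rmin_r M1 (M2 - s)); lra. }
  specialize (HM1 a ltac:(lra)). specialize (HM2 (a + s) ltac:(lra)).
  specialize (Ha0 a ltac:(lra)).
  apply Rabs_lt_between' in HM1. apply Rabs_lt_between' in HM2. lra.
Qed.

Lemma abs_RInt_gen (g : R -> R) a b K : ex_RInt g a b -> (forall t, Rabs (g t) <= K) ->
  Rabs (RInt g a b) <= K * Rabs (b - a).
Proof.
  intros Hex HK.
  destruct (Rle_dec a b) as [Hab|Hab].
  - rewrite (Rabs_right (b - a)) by lra. rewrite Rmult_comm. apply abs_RInt_le_const; auto.
  - rewrite <- (opp_RInt_swap g b a) by (apply ex_RInt_swap; auto).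
    unfold opp; simpl. rewrite Rabs_Ropp.
    rewrite (Rabs_left (b - a)) by lra. replace (- (b - a)) with (a - b) by ring.
    rewrite Rmult_comm. apply abs_RInt_le_const; [lra| |auto].
    apply ex_RInt_swap; auto.
Qed.


Definition Good (sigma L : R) (phi : R -> R) :=
  (forall x y, Rabs (phi x - phi y) <= L * Rabs (x - y)) /\
  (forall x, 0 <= phi x <= 1) /\ (forall x, 0 <= x -> phi x = sigma).

Definition Iv (J phi : R -> R) (xi : R) := int_minf (fun y => J (xi - y) * phi y) 0.

Lemma kern_cont J B sigma L phi xi : JH J B -> Good sigma L phi ->
  forall y, continuous (fun y => J (xi - y) * phi y) y.
Proof.
  intros HJ [Hl _] y. apply cont_mult.
  - apply (cont_comp (fun y => xi - y) J). apply cont_minus; [apply cont_const|apply cont_id].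
    apply HJ.
  - apply (lip_cont phi L Hl).
Qed.

Lemma kern_ex J B sigma L phi xi : JH J B -> Good sigma L phi ->
  forall a b, ex_RInt (fun y => J (xi - y) * phi y) a b.
Proof. intros HJ Hp. apply exRInt_cont. apply (kern_cont J B sigma L phi xi HJ Hp). Qed.

Lemma Jr_ex J B xi : JH J B -> forall a b, ex_RInt (fun y => J (xi - y)) a b.
Proof.
  intros HJ. apply exRInt_cont. intro y.
  apply (cont_comp (fun y => xi - y) J). apply cont_minus; [apply cont_const|apply cont_id].
  apply HJ.
Qed.

Lemma kern_le J B sigma L phi xi : JH J B -> Good sigma L phi ->
  forall a, a <= 0 -> 0 <= RInt (fun y => J (xi - y) * phi y) a 0 <= 1.
Proof.
  intros HJ Hp a Ha. pose proof HJ as [_ [HJp _]]. pose proof Hp as [_ [Hb _]].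
  split.
  - apply RInt_ge_0; auto. apply (kern_ex J B sigma L phi xi HJ Hp).
    intros y _. apply Rmult_le_pos; [apply HJp|apply Hb].
  - apply Rle_trans with (RInt (fun y => J (xi - y)) a 0).
    + apply RInt_le; auto. apply (kern_ex J B sigma L phi xi HJ Hp). apply (Jr_ex J B xi HJ).
      intros y _. specialize (HJp (xi - y)). specialize (Hb y).
      rewrite <- (Rmult_1_r (J (xi - y))) at 2. apply Rmult_le_compat_l; lra.
    + rewrite (J_shift J B HJ). apply (J_le1 J B HJ). lra.
Qed.

Lemma Iv_is J B sigma L phi xi : JH J B -> Good sigma L phi ->
  is_RInt_gen (fun y => J (xi - y) * phi y) (Rbar_locally m_infty) (at_point 0) (Iv J phi xi).
Proof.
  intros HJ Hp.
  destruct (gen_left_exists (fun y => J (xi - y) * phi y) 0 1) as [l Hl].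
  - intro a. apply (kern_ex J B sigma L phi xi HJ Hp).
  - intros y. apply Rmult_le_pos; [apply HJ|apply Hp].
  - intros a Ha. apply (kern_le J B sigma L phi xi HJ Hp a Ha).
  - unfold Iv, int_minf. rewrite (is_RInt_gen_unique _ l Hl). exact Hl.
Qed.

Lemma av_is J B xi : JH J B ->
  is_RInt_gen J (Rbar_locally m_infty) (at_point xi) (a_fun J xi).
Proof.
  intros HJ.
  destruct (gen_left_exists J xi 1) as [l Hl].
  - intros a. apply (J_ex J B HJ).
  - intros y. apply HJ.
  - intros a Ha. apply (J_le1 J B HJ a xi Ha).
  - unfold a_fun, int_minf. rewrite (is_RInt_gen_unique _ l Hl). exact Hl.
Qed.

Lemma Iv_av_bound J B sigma L phi xi : JH J B -> Good sigma L phi ->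
  0 <= Iv J phi xi /\ 0 <= a_fun J xi /\ Iv J phi xi + a_fun J xi <= 1.
Proof.
  intros HJ Hp.
  assert (HI := Iv_is J B sigma L phi xi HJ Hp).
  assert (HA := av_is J B xi HJ).
  assert (HexI := kern_ex J B sigma L phi xi HJ Hp).
  assert (HexA : forall a, ex_RInt J a xi) by (intros; apply (J_ex J B HJ)).
  split; [|split].
  - apply (gen_left_ge _ 0 _ 0 HI (fun a => HexI a 0)). exists 0. intros a Ha.
    apply (kern_le J B sigma L phi xi HJ Hp a). lra.
  - apply (gen_left_ge _ xi _ 0 HA HexA). exists xi. intros a Ha.
    apply (J_ge0 J B HJ). lra.
  - apply le_eps. intros eps Heps.
    destruct (gen_left_approx _ _ _ HI (fun a => HexI a 0) (eps/2) ltac:(lra)) as [M1 HM1].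
    destruct (gen_left_approx _ _ _ HA HexA (eps/2) ltac:(lra)) as [M2 HM2].
    set (a := Rmin (Rmin M1 M2) (Rmin 0 xi) - 1).
    assert (a < M1 /\ a < M2 /\ a < 0 /\ a < xi).
    { unfold a. generalize (Rmin_l (Rmin M1 M2) (Rmin 0 xi)) (Rmin_r (Rmin M1 M2) (Rmin 0 xi))
       (Rmin_l M1 M2) (Rmin_r M1 M2) (Rmin_l 0 xi) (Rmin_r 0 xi). lra. }
    specialize (HM1 a ltac:(lra)). specialize (HM2 a ltac:(lra)).
    apply Rabs_lt_between' in HM1. apply Rabs_lt_between' in HM2.
    assert (H1 : RInt (fun y => J (xi - y) * phi y) a 0 <= RInt J xi (xi - a)).
    { replace (RInt J xi (xi - a)) with (RInt (fun y => J (xi - y)) a 0)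
        by (rewrite (J_shift J B HJ), Rminus_0_r; reflexivity).
      apply RInt_le; [lra| apply HexI | apply (Jr_ex J B xi HJ)|].
      intros y _. pose proof HJ as [_ [HJp _]]. specialize (HJp (xi - y)).
      destruct Hp as [_ [Hb _]]. specialize (Hb y).
      rewrite <- (Rmult_1_r (J (xi - y))) at 2. apply Rmult_le_compat_l; lra. }
    assert (H2 : RInt J a xi + RInt J xi (xi - a) <= 1).
    { rewrite <- (RInt_Chasles_R J a xi (xi - a)); try apply (J_ex J B HJ).
      apply (J_le1 J B HJ). lra. }
    lra.
Qed.

Lemma Iv_mono J B sigma L1 L2 phi psi xi : JH J B -> Good sigma L1 phi -> Good sigma L2 psi ->
  (forall x, phi x <= psi x) -> Iv J phi xi <= Iv J psi xi.
Proof.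
  intros HJ Hp Hq Hle.
  assert (H := gen_left_diff _ _ 0 0 _ _ 0 0 (Iv_is J B sigma L1 phi xi HJ Hp)
                 (Iv_is J B sigma L2 psi xi HJ Hq)
                 (fun a => kern_ex J B sigma L1 phi xi HJ Hp a 0)
                 (fun a => kern_ex J B sigma L2 psi xi HJ Hq a 0)).
  cut (Iv J phi xi - Iv J psi xi <= 0). lra.
  apply H. exists 0. intros a Ha. rewrite Rplus_0_r.
  assert (RInt (fun y => J (xi - y) * phi y) a 0 <= RInt (fun y => J (xi - y) * psi y) a 0).
  { apply RInt_le; [lra|apply (kern_ex J B sigma L1 phi xi HJ Hp)|apply (kern_ex J B sigma L2 psi xi HJ Hq)|].
    intros y _. apply Rmult_le_compat_l; [apply HJ|apply Hle]. }
  lra.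
Qed.


Lemma av_lip J B xi xi' : JH J B -> Rabs (a_fun J xi' - a_fun J xi) <= B * Rabs (xi' - xi).
Proof.
  intros HJ.
  assert (Hex : forall x a, ex_RInt J a x) by (intros; apply (J_ex J B HJ)).
  assert (HB : forall t, Rabs (J t) <= B).
  { intros t. destruct HJ as [_ [HJp _]]. specialize (HJp t). rewrite Rabs_right; lra. }
  assert (Hc : forall a, Rabs (RInt J a xi' - RInt J (a + 0) xi) <= B * Rabs (xi' - xi)).
  { intros a. rewrite Rplus_0_r.
    rewrite (RInt_Chasles_R J a xi xi') by apply Hex.
    assert (E : @eq R (RInt J a xi + RInt J xi xi' - RInt J a xi) (RInt J xi xi')) by ring.
    rewrite E.
    apply abs_RInt_gen; auto. }
  apply Rabs_le_between'. split.
  - cut (a_fun J xi - a_fun J xi' <= B * Rabs (xi' - xi)). lra.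
    apply (gen_left_diff J J xi xi' _ _ 0 _ (av_is J B xi HJ) (av_is J B xi' HJ) (Hex xi) (Hex xi')).
    exists 0. intros a _. specialize (Hc a). rewrite Rplus_0_r in *.
    apply Rabs_le_between' in Hc. lra.
  - cut (a_fun J xi' - a_fun J xi <= B * Rabs (xi' - xi)). lra.
    apply (gen_left_diff J J xi' xi _ _ 0 _ (av_is J B xi' HJ) (av_is J B xi HJ) (Hex xi') (Hex xi)).
    exists 0. intros a _. specialize (Hc a).
    apply Rabs_le_between' in Hc. lra.
Qed.

Lemma Iv_lip_aux J B sigma L phi xi xi' a : JH J B -> Good sigma L phi -> a <= 0 ->
  Rabs (RInt (fun y => J (xi' - y) * phi y) a 0 - RInt (fun y => J (xi - y) * phi y) (a - (xi' - xi)) 0)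
   <= (L + B) * Rabs (xi' - xi).
Proof.
  intros HJ Hp Ha.
  set (h := xi' - xi).
  assert (Hk := kern_ex J B sigma L phi xi HJ Hp).
  assert (Hk' := kern_ex J B sigma L phi xi' HJ Hp).
  assert (Hkc' := kern_cont J B sigma L phi xi' HJ Hp).
  pose proof HJ as [HJc [HJp _]]. pose proof Hp as [Hl [Hb _]].
  assert (E1 : @eq R (RInt (fun y => J (xi' - y) * phi y) a 0)
                 (RInt (fun y => J (xi - y) * phi (y + h)) (a - h) (0 - h))).
  { transitivity (RInt (fun y => (fun y => J (xi' - y) * phi y) (y + h)) (a - h) (0 - h)).
    - rewrite (RInt_transl (fun y => J (xi' - y) * phi y) h (a - h) (0 - h) Hkc').
      replace (a - h + h) with a by ring. replace (0 - h + h) with 0 by ring. reflexivity.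
    - apply RInt_ext. intros x _. cbv beta.
      replace (xi' - (x + h)) with (xi - x) by (unfold h; ring). reflexivity. }
  assert (HJr : forall y, continuous (fun y => J (xi - y)) y).
  { intro y. apply (cont_comp (fun y => xi - y) J). apply cont_minus; [apply cont_const|apply cont_id].
    apply HJc. }
  assert (Hsh : forall p q, ex_RInt (fun y => J (xi - y) * phi (y + h)) p q).
  { intros p q. apply exRInt_cont. intro y. apply cont_mult; auto.
    apply (cont_comp (fun y => y + h) phi). apply cont_plus; [apply cont_id|apply cont_const].
    apply (lip_cont phi L Hl). }
  assert (E2 : @eq R (RInt (fun y => J (xi - y) * phi y) (a - h) 0)
     (RInt (fun y => J (xi - y) * phi y) (a - h) (0 - h) + RInt (fun y => J (xi - y) * phi y) (0 - h) 0)).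
  { apply RInt_Chasles_R; apply Hk. }
  assert (E3 : @eq R (RInt (fun y => J (xi - y) * phi (y + h)) (a - h) (0 - h) -
                      RInt (fun y => J (xi - y) * phi y) (a - h) (0 - h))
                (RInt (fun y => J (xi - y) * (phi (y + h) - phi y)) (a - h) (0 - h))).
  { rewrite <- (RInt_minus (fun y => J (xi - y) * phi (y + h))); [|apply Hsh|apply Hk].
    apply RInt_ext. intros x _. unfold minus, plus, opp; simpl. ring. }
  assert (HJint : 0 <= RInt (fun y => J (xi - y)) (a - h) (0 - h) <= 1).
  { rewrite (J_shift J B HJ). split; [apply (J_ge0 J B HJ)|apply (J_le1 J B HJ)]; lra. }
  assert (Hscal : forall k, @eq R (RInt (fun y => k * J (xi - y)) (a - h) (0 - h))
                      (k * RInt (fun y => J (xi - y)) (a - h) (0 - h))).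
  { intros k. rewrite (RInt_scal (fun y => J (xi - y))). reflexivity. apply exRInt_cont; auto. }
  assert (HI3 : Rabs (RInt (fun y => J (xi - y) * (phi (y + h) - phi y)) (a - h) (0 - h)) <= L * Rabs h).
  { assert (HLh : 0 <= L * Rabs h).
    { specialize (Hl 1 0). assert (0 <= L).
      { apply Rnot_lt_le. intro. assert (L * Rabs (1 - 0) < 0).
        { rewrite Rminus_0_r, Rabs_R1. lra. } generalize (Rabs_pos (phi 1 - phi 0)). lra. }
      apply Rmult_le_pos; auto. apply Rabs_pos. }
    assert (Hpt : forall y, Rabs (phi (y + h) - phi y) <= L * Rabs h).
    { intros y. specialize (Hl (y + h) y). replace (y + h - y) with h in Hl by ring. auto. }
    apply Rabs_le_between. split.
    - apply Rle_trans with (RInt (fun y => (- (L * Rabs h)) * J (xi - y)) (a - h) (0 - h)).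
      + rewrite Hscal. nra.
      + apply RInt_le; [lra| apply exRInt_cont; intro; apply cont_mult; auto; apply cont_const
                       | apply exRInt_cont; intro; apply cont_mult; auto;
                         apply cont_minus; apply (cont_comp _ phi); auto using cont_plus, cont_id, cont_const;
                         apply (lip_cont phi L Hl) | ].
        intros y _. specialize (Hpt y). specialize (HJp (xi - y)).
        apply Rabs_le_between in Hpt. nra.
    - apply Rle_trans with (RInt (fun y => (L * Rabs h) * J (xi - y)) (a - h) (0 - h)).
      + apply RInt_le; [lra
                       | apply exRInt_cont; intro; apply cont_mult; auto;
                         apply cont_minus; apply (cont_comp _ phi); auto using cont_plus, cont_id, cont_const;
                         apply (lip_cont phi L Hl)
                       | apply exRInt_cont; intro; apply cont_mult; auto; apply cont_const | ].
        intros y _. specialize (Hpt y). specialize (HJp (xi - y)).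
        apply Rabs_le_between in Hpt. nra.
      + rewrite Hscal. nra. }
  assert (HI4 : Rabs (RInt (fun y => J (xi - y) * phi y) (0 - h) 0) <= B * Rabs h).
  { replace (Rabs h) with (Rabs (0 - (0 - h))) by (f_equal; ring).
    apply abs_RInt_gen; auto. intros t. specialize (HJp (xi - t)). specialize (Hb t).
    rewrite Rabs_mult, (Rabs_right (J _)), (Rabs_right (phi t)) by lra. nra. }
  rewrite E1, E2.
  replace (Rabs h) with (Rabs (xi' - xi)) in * by reflexivity.
  apply Rabs_le_between in HI3. apply Rabs_le_between in HI4.
  apply Rabs_le_between'. lra.
Qed.

Lemma Iv_lip J B sigma L phi xi xi' : JH J B -> Good sigma L phi ->
  Rabs (Iv J phi xi' - Iv J phi xi) <= (L + B) * Rabs (xi' - xi).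
Proof.
  intros HJ Hp.
  assert (H1 := Iv_is J B sigma L phi xi HJ Hp).
  assert (H2 := Iv_is J B sigma L phi xi' HJ Hp).
  assert (Hk := kern_ex J B sigma L phi xi HJ Hp).
  assert (Hk' := kern_ex J B sigma L phi xi' HJ Hp).
  apply Rabs_le_between'. split.
  - cut (Iv J phi xi - Iv J phi xi' <= (L + B) * Rabs (xi' - xi)). lra.
    apply (gen_left_diff _ _ 0 0 _ _ (xi' - xi) _ H1 H2 (fun a => Hk a 0) (fun a => Hk' a 0)).
    exists (Rmin 0 (- (xi' - xi))). intros a Ha.
    assert (Ha' : a + (xi' - xi) <= 0) by (generalize (Rmin_r 0 (- (xi' - xi))); lra).
    assert (H := Iv_lip_aux J B sigma L phi xi xi' (a + (xi' - xi)) HJ Hp Ha').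
    replace (a + (xi' - xi) - (xi' - xi)) with a in H by ring.
    apply Rabs_le_between' in H. lra.
  - cut (Iv J phi xi' - Iv J phi xi <= (L + B) * Rabs (xi' - xi)). lra.
    apply (gen_left_diff _ _ 0 0 _ _ (- (xi' - xi)) _ H2 H1 (fun a => Hk' a 0) (fun a => Hk a 0)).
    exists 0. intros a Ha.
    assert (H := Iv_lip_aux J B sigma L phi xi xi' a HJ Hp ltac:(lra)).
    replace (a + - (xi' - xi)) with (a - (xi' - xi)) by ring.
    apply Rabs_le_between' in H. lra.
Qed.


Definition FT (f : R -> R) (c M d K : R) :=
  0 <= K /\
  (forall u v, 0 <= u -> u <= v -> v <= 1 ->
      0 <= ftilde f c M d v - ftilde f c M d u <= K * (v - u)) /\
  ftilde f c M d 0 = 0 /\ ftilde f c M d 1 = c * M - d.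

Definition Hv d J f c M sigma (phi : R -> R) (xi : R) :=
  d * int_minf (fun y => J (xi - y) * phi y) 0 + d * sigma * a_fun J xi + ftilde f c M d (phi xi).
Definition Gv d J f c M sigma (phi : R -> R) :=
  fun xi => exp (- M * xi) * Hv d J f c M sigma phi xi.
Definition Fv d J f c M sigma (phi : R -> R) (x : R) :=
  exp (M * x) * sigma + exp (M * x) / c * RInt (Gv d J f c M sigma phi) x 0.

Lemma A_op_eq d J f c M sigma phi x :
  A_op d J f c M sigma phi x = if Rle_dec 0 x then sigma else Fv d J f c M sigma phi x.
Proof. reflexivity. Qed.

Lemma ft_lip f c M d K u v : FT f c M d K -> 0 <= u <= 1 -> 0 <= v <= 1 ->
  Rabs (ftilde f c M d v - ftilde f c M d u) <= K * Rabs (v - u).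
Proof.
  intros [HK [Hm _]] Hu Hv.
  destruct (Rle_dec u v) as [Huv|Huv].
  - specialize (Hm u v ltac:(lra) Huv ltac:(lra)).
    rewrite Rabs_right by lra. rewrite (Rabs_right (v - u)) by lra. lra.
  - specialize (Hm v u ltac:(lra) ltac:(lra) ltac:(lra)).
    rewrite Rabs_left1 by lra. rewrite (Rabs_left1 (v - u)) by lra. lra.
Qed.

Lemma Hv_bounds d J f c M sigma B L K phi xi : 0 < d -> 0 < sigma < 1 -> JH J B -> FT f c M d K ->
  Good sigma L phi -> 0 <= Hv d J f c M sigma phi xi <= c * M.
Proof.
  intros Hd Hs HJ [HK [Hm [H0 H1]]] Hp.
  destruct (Iv_av_bound J B sigma L phi xi HJ Hp) as [HI [HA HIA]].
  unfold Iv in *. unfold Hv.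
  destruct Hp as [_ [Hb _]]. specialize (Hb xi).
  assert (F0 := Hm 0 (phi xi) ltac:(lra) ltac:(lra) ltac:(lra)).
  assert (F1 := Hm (phi xi) 1 ltac:(lra) ltac:(lra) ltac:(lra)).
  assert (0 <= d * int_minf (fun y => J (xi - y) * phi y) 0) by (apply Rmult_le_pos; lra).
  assert (0 <= d * sigma * a_fun J xi) by (apply Rmult_le_pos; [apply Rmult_le_pos|]; lra).
  assert (d * sigma * a_fun J xi <= d * a_fun J xi).
  { apply Rmult_le_compat_r; auto. nra. }
  assert (d * int_minf (fun y => J (xi - y) * phi y) 0 + d * a_fun J xi <= d) by nra.
  lra.
Qed.

Lemma Hv_lip d J f c M sigma B L K phi xi xi' : 0 < d -> 0 < sigma < 1 -> JH J B -> FT f c M d K ->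
  Good sigma L phi ->
  Rabs (Hv d J f c M sigma phi xi' - Hv d J f c M sigma phi xi)
   <= (d * (L + B) + d * sigma * B + K * L) * Rabs (xi' - xi).
Proof.
  intros Hd Hs HJ HF Hp.
  assert (H1 := Iv_lip J B sigma L phi xi xi' HJ Hp). unfold Iv in H1.
  assert (H2 := av_lip J B xi xi' HJ).
  pose proof Hp as [Hl [Hb _]].
  assert (H3 := ft_lip f c M d K (phi xi) (phi xi') HF (Hb xi) (Hb xi')).
  assert (H4 := Hl xi' xi).
  destruct HF as [HK _].
  unfold Hv.
  set (I1 := int_minf (fun y : R => J (xi' - y) * phi y) 0) in *.
  set (I0 := int_minf (fun y : R => J (xi - y) * phi y) 0) in *.
  set (r := Rabs (xi' - xi)) in *.
  assert (Hr : 0 <= r) by apply Rabs_pos.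
  apply Rabs_le_between in H1. apply Rabs_le_between in H2. apply Rabs_le_between in H3.
  apply Rabs_le_between. 
  assert (K * Rabs (phi xi' - phi xi) <= K * (L * r)) by (apply Rmult_le_compat_l; auto).
  assert (d * (I1 - I0) <= d * ((L + B) * r)) by (apply Rmult_le_compat_l; lra).
  assert (d * (- ((L + B) * r)) <= d * (I1 - I0)) by (apply Rmult_le_compat_l; lra).
  assert (0 <= d * sigma) by nra.
  assert (d * sigma * (a_fun J xi' - a_fun J xi) <= d * sigma * (B * r)) by (apply Rmult_le_compat_l; lra).
  assert (d * sigma * (- (B * r)) <= d * sigma * (a_fun J xi' - a_fun J xi)) by (apply Rmult_le_compat_l; lra).
  split; lra.
Qed.

Lemma Hv_cont d J f c M sigma B L K phi : 0 < d -> 0 < sigma < 1 -> JH J B -> FT f c M d K ->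
  Good sigma L phi -> forall x, continuous (Hv d J f c M sigma phi) x.
Proof.
  intros Hd Hs HJ HF Hp.
  apply (lip_cont _ (d * (L + B) + d * sigma * B + K * L)).
  intros x y. apply (Hv_lip d J f c M sigma B L K phi y x Hd Hs HJ HF Hp).
Qed.

Lemma Gv_cont d J f c M sigma B L K phi : 0 < d -> 0 < sigma < 1 -> JH J B -> FT f c M d K ->
  Good sigma L phi -> forall x, continuous (Gv d J f c M sigma phi) x.
Proof.
  intros Hd Hs HJ HF Hp x. unfold Gv. apply cont_mult.
  apply cont_exp. apply (Hv_cont d J f c M sigma B L K phi Hd Hs HJ HF Hp).
Qed.

Lemma locally_all (P : R -> Prop) x : (forall y, P y) -> locally x P.
Proof. intros H. exists (mkposreal 1 Rlt_0_1). intros; auto. Qed.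

Lemma is_derive_val (f : R -> R) x l1 l2 : is_derive f x l1 -> l1 = l2 -> is_derive f x l2.
Proof. intros H <-; exact H. Qed.

Lemma Fgen_deriv (G : R -> R) (M c sigma : R) : 0 < c -> (forall x, continuous G x) ->
  forall x, is_derive (fun x => exp (M * x) * sigma + exp (M * x) / c * RInt G x 0) x
    (M * (exp (M * x) * sigma + exp (M * x) / c * RInt G x 0) - exp (M * x) / c * G x).
Proof.
  intros Hc HG x.
  assert (HR : is_derive (fun x => RInt G x 0) x (opp (G x))).
  { apply (is_derive_RInt' G (fun x => RInt G x 0) x 0).
    - apply locally_all. intros y. apply (RInt_correct G). apply exRInt_cont; auto.
    - auto. }
  assert (HE : is_derive (fun x => exp (M * x)) x (M * exp (M * x))).
  { auto_derive; auto. ring. }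
  assert (HE2 : is_derive (fun x => exp (M * x) / c) x (M * exp (M * x) / c)).
  { auto_derive; auto. field. lra. }
  assert (H1 := is_derive_mult _ _ x _ _ HE2 HR ltac:(intros; apply Rmult_comm)).
  assert (H2 := is_derive_scal_l _ x _ sigma HE).
  assert (H3 := is_derive_plus _ _ x _ _ H2 H1).
  eapply is_derive_val; [eapply is_derive_ext; [|exact H3]|].
  - intros t. simpl. unfold scal, plus, mult; simpl. unfold mult; simpl. ring.
  - unfold scal, plus, mult, opp; simpl. unfold mult; simpl. match goal with |- ?a = ?b => change (@eq R a b) end. field. lra.
Qed.

Ltac Req := match goal with |- ?a = ?b => change (@eq R a b) end.

Lemma exp_inv_mul M x : exp (M * x) * exp (- M * x) = 1.
Proof. rewrite <- exp_plus. replace (M * x + - M * x) with 0 by ring. apply exp_0. Qed.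

Lemma Fv_deriv d J f c M sigma B L K phi : 0 < d -> 0 < sigma < 1 -> 0 < c -> JH J B -> FT f c M d K ->
  Good sigma L phi -> forall x,
  is_derive (Fv d J f c M sigma phi) x (M * Fv d J f c M sigma phi x - Hv d J f c M sigma phi x / c).
Proof.
  intros Hd Hs Hc HJ HF Hp x.
  eapply is_derive_val.
  apply (Fgen_deriv _ M c sigma Hc (Gv_cont d J f c M sigma B L K phi Hd Hs HJ HF Hp)).
  unfold Fv, Gv. 
  assert (E := exp_inv_mul M x).
  set (RR := RInt _ x 0). set (HH := Hv d J f c M sigma phi x). Req. replace (exp (M * x) / c * (exp (- M * x) * HH)) with ((exp (M * x) * exp (- M * x)) * HH / c) by (field; lra). rewrite E. field. lra.
Qed.

Lemma RInt_exp M x : 0 < M -> RInt (fun xi => exp (- M * xi)) x 0 = (exp (- M * x) - 1) / M.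
Proof.
  intros HM. apply is_RInt_unique.
  assert (H := is_RInt_derive (fun xi => - exp (- M * xi) / M) (fun xi => exp (- M * xi)) x 0).
  replace ((exp (- M * x) - 1) / M) with (minus (- exp (- M * 0) / M) (- exp (- M * x) / M)).
  - apply H.
    + intros y _. auto_derive; auto. field. lra.
    + intros y _. apply cont_exp.
  - unfold minus, plus, opp; simpl. replace (- M * 0) with 0 by ring. rewrite exp_0. field. lra.
Qed.

Lemma Fv_0 d J f c M sigma phi : Fv d J f c M sigma phi 0 = sigma.
Proof.
  unfold Fv. rewrite RInt_point. rewrite Rmult_0_r, exp_0. unfold zero; simpl. Req. unfold Rdiv. ring.
Qed.

Lemma RInt_scal_R (g : R -> R) k a b : ex_RInt g a b ->
  RInt (fun y => k * g y) a b = k * RInt g a b.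
Proof. intros H. exact (RInt_scal g a b k H). Qed.

Lemma deriv_cont (g : R -> R) x l : is_derive g x l -> continuity_pt g x.
Proof.
  intros H. apply derivable_continuous_pt. apply ex_derive_Reals_0. exists l. exact H.
Qed.

Lemma Fv_bounds d J f c M sigma B L K phi x : 0 < d -> 0 < sigma < 1 -> 0 < c -> 0 < M -> JH J B ->
  FT f c M d K -> Good sigma L phi -> x <= 0 -> 0 <= Fv d J f c M sigma phi x <= 1.
Proof.
  intros Hd Hs Hc HM HJ HF Hp Hx.
  assert (HG := Gv_cont d J f c M sigma B L K phi Hd Hs HJ HF Hp).
  assert (HH := fun xi => Hv_bounds d J f c M sigma B L K phi xi Hd Hs HJ HF Hp).
  assert (Hex : ex_RInt (Gv d J f c M sigma phi) x 0) by (apply exRInt_cont; auto).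
  assert (R0 : 0 <= RInt (Gv d J f c M sigma phi) x 0).
  { apply RInt_ge_0; auto. intros y _. unfold Gv. apply Rmult_le_pos.
    apply Rlt_le, exp_pos. apply HH. }
  assert (R1 : RInt (Gv d J f c M sigma phi) x 0 <= RInt (fun xi => (c * M) * exp (- M * xi)) x 0).
  { apply RInt_le; auto. apply exRInt_cont. intros; apply cont_mult; [apply cont_const|apply cont_exp].
    intros y _. unfold Gv. specialize (HH y). rewrite Rmult_comm. apply Rmult_le_compat_r.
    apply Rlt_le, exp_pos. lra. }
  rewrite RInt_scal_R in R1 by (apply exRInt_cont; intros; apply cont_exp).
  rewrite RInt_exp in R1 by auto.
  unfold Fv.
  set (RR := RInt (Gv d J f c M sigma phi) x 0) in *.
  assert (Ee := exp_inv_mul M x).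
  assert (He : 0 < exp (M * x)) by apply exp_pos.
  assert (He' : 0 < exp (- M * x)) by apply exp_pos.
  split.
  - assert (0 <= exp (M * x) / c * RR) by (apply Rmult_le_pos; [apply Rlt_le, Rdiv_lt_0_compat|]; lra).
    nra.
  - assert (exp (M * x) / c * RR <= exp (M * x) / c * (c * M * ((exp (- M * x) - 1) / M))).
    { apply Rmult_le_compat_l; [apply Rlt_le, Rdiv_lt_0_compat; lra|lra]. }
    replace (exp (M * x) / c * (c * M * ((exp (- M * x) - 1) / M))) with
      (exp (M * x) * exp (- M * x) - exp (M * x)) in H by (field; lra).
    nra.
Qed.

Lemma Fv_lip d J f c M sigma B L K phi x y : 0 < d -> 0 < sigma < 1 -> 0 < c -> 0 < M -> JH J B ->
  FT f c M d K -> Good sigma L phi -> x <= 0 -> y <= 0 ->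
  Rabs (Fv d J f c M sigma phi x - Fv d J f c M sigma phi y) <= M * Rabs (x - y).
Proof.
  intros Hd Hs Hc HM HJ HF Hp Hx Hy.
  assert (HD := Fv_deriv d J f c M sigma B L K phi Hd Hs Hc HJ HF Hp).
  destruct (MVT_gen (Fv d J f c M sigma phi) y x
     (fun t => M * Fv d J f c M sigma phi t - Hv d J f c M sigma phi t / c)) as [c0 [Hc0 E]].
  - intros; apply HD.
  - intros t _. eapply deriv_cont. apply HD.
  - rewrite E. rewrite Rabs_mult. apply Rmult_le_compat_r. apply Rabs_pos.
    assert (Hc0' : c0 <= 0).
    { destruct Hc0 as [_ Hc0]. eapply Rle_trans. apply Hc0. apply Rmax_lub; auto. }
    assert (H1 := Fv_bounds d J f c M sigma B L K phi c0 Hd Hs Hc HM HJ HF Hp Hc0').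
    assert (H2 := Hv_bounds d J f c M sigma B L K phi c0 Hd Hs HJ HF Hp).
    assert (0 <= Hv d J f c M sigma phi c0 / c <= M).
    { split. apply Rdiv_le_0_compat; lra. apply Rmult_le_reg_r with c; auto.
      field_simplify; lra. }
    apply Rabs_le_between. nra.
Qed.

Lemma A_op_good d J f c M sigma B L K phi : 0 < d -> 0 < sigma < 1 -> 0 < c -> 0 < M -> JH J B ->
  FT f c M d K -> Good sigma L phi -> Good sigma M (A_op d J f c M sigma phi).
Proof.
  intros Hd Hs Hc HM HJ HF Hp.
  assert (Hl := fun x y => Fv_lip d J f c M sigma B L K phi x y Hd Hs Hc HM HJ HF Hp).
  assert (Hb := fun x => Fv_bounds d J f c M sigma B L K phi x Hd Hs Hc HM HJ HF Hp).
  assert (H0 := Fv_0 d J f c M sigma phi).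
  split; [|split].
  - intros x y. rewrite !A_op_eq.
    destruct (Rle_dec 0 x); destruct (Rle_dec 0 y).
    + rewrite Rminus_diag, Rabs_R0. apply Rmult_le_pos; [lra|apply Rabs_pos].
    + assert (T := Hl 0 y ltac:(lra) ltac:(lra)). rewrite H0 in T.
      eapply Rle_trans. apply T.
      apply Rmult_le_compat_l; [lra|]. rewrite (Rabs_right (0 - y)) by lra. rewrite (Rabs_right (x - y)) by lra. lra.
    + assert (T := Hl x 0 ltac:(lra) ltac:(lra)). rewrite H0 in T.
      eapply Rle_trans. apply T.
      apply Rmult_le_compat_l; [lra|]. rewrite (Rabs_left1 (x - 0)) by lra.
      rewrite (Rabs_left1 (x - y)) by lra. lra.
    + apply Hl; lra.
  - intros x. rewrite A_op_eq. destruct (Rle_dec 0 x). lra. apply Hb; lra.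
  - intros x Hx. rewrite A_op_eq. destruct (Rle_dec 0 x). auto. lra.
Qed.

Lemma A_op_mono d J f c M sigma B L1 L2 K phi psi x : 0 < d -> 0 < sigma < 1 -> 0 < c -> 0 < M ->
  JH J B -> FT f c M d K -> Good sigma L1 phi -> Good sigma L2 psi -> (forall y, phi y <= psi y) ->
  A_op d J f c M sigma phi x <= A_op d J f c M sigma psi x.
Proof.
  intros Hd Hs Hc HM HJ HF Hp Hq Hle.
  rewrite !A_op_eq. destruct (Rle_dec 0 x). lra.
  unfold Fv. apply Rplus_le_compat_l. apply Rmult_le_compat_l.
  apply Rlt_le, Rdiv_lt_0_compat; [apply exp_pos|lra].
  apply RInt_le; [lra| apply exRInt_cont; apply (Gv_cont d J f c M sigma B L1 K phi); auto
                 | apply exRInt_cont; apply (Gv_cont d J f c M sigma B L2 K psi); auto|].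
  intros y _. unfold Gv. apply Rmult_le_compat_l. apply Rlt_le, exp_pos.
  unfold Hv.
  assert (H1 := Iv_mono J B sigma L1 L2 phi psi y HJ Hp Hq Hle). unfold Iv in H1.
  destruct HF as [_ [Hm _]].
  destruct Hp as [_ [Hp _]]. destruct Hq as [_ [Hq _]].
  assert (H2 := Hm (phi y) (psi y) ltac:(apply Hp) (Hle y) ltac:(apply Hq)).
  assert (d * int_minf (fun y0 : R => J (y - y0) * phi y0) 0 <= d * int_minf (fun y0 : R => J (y - y0) * psi y0) 0)
    by (apply Rmult_le_compat_l; lra).
  lra.
Qed.


Lemma full_int J B sigma L phi x : JH J B -> Good sigma L phi -> 0 < sigma < 1 ->
  is_RInt_gen (fun y => J (x - y) * phi y) (Rbar_locally m_infty) (Rbar_locally p_infty)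
     (Iv J phi x + sigma * a_fun J x).
Proof.
  intros HJ Hp Hs.
  apply (is_RInt_gen_Chasles _ 0 (Iv J phi x) (sigma * a_fun J x)).
  - apply (Iv_is J B sigma L phi x HJ Hp).
  - assert (Hk := kern_ex J B sigma L phi x HJ Hp).
    apply gen_right_intro; auto.
    intros eps Heps.
    destruct (gen_left_approx J x _ (av_is J B x HJ) (fun a => J_ex J B HJ a x) eps Heps) as [M0 HM0].
    exists (Rmax 0 (x - M0)). intros b Hb.
    assert (Hb0 : 0 < b) by (generalize (Rmax_l 0 (x - M0)); lra).
    assert (Hb1 : x - b < M0) by (generalize (Rmax_r 0 (x - M0)); lra).
    assert (E : @eq R (RInt (fun y => J (x - y) * phi y) 0 b) (sigma * RInt J (x - b) x)).
    { transitivity (RInt (fun y => sigma * J (x - y)) 0 b).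
      - apply RInt_ext. intros y Hy. rewrite Rmin_left, Rmax_right in Hy by lra.
        destruct Hp as [_ [_ Hs']]. rewrite Hs' by lra. Req. ring.
      - rewrite RInt_scal_R by (apply (Jr_ex J B x HJ)). rewrite (J_shift J B HJ).
        rewrite Rminus_0_r. reflexivity. }
    rewrite E. specialize (HM0 (x - b) Hb1).
    replace (sigma * RInt J (x - b) x - sigma * a_fun J x) with (sigma * (RInt J (x - b) x - a_fun J x)) by ring.
    rewrite Rabs_mult, Rabs_right by lra.
    assert (0 <= Rabs (RInt J (x - b) x - a_fun J x)) by apply Rabs_pos.
    nra.
Qed.

Lemma lim_minf_upper (g : R -> R) (l : R) x : is_lim g m_infty l ->
  (forall y, y <= x -> g x <= g y) -> g x <= l.
Proof.
  intros H Hm. apply le_eps. intros eps Heps.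
  destruct (H (ball l (mkposreal eps Heps)) (locally_ball _ _)) as [M0 HM0].
  set (y := Rmin M0 x - 1).
  assert (y < M0 /\ y <= x) by (unfold y; generalize (Rmin_l M0 x) (Rmin_r M0 x); lra).
  specialize (HM0 y ltac:(lra)). apply ball_R in HM0. simpl in HM0.
  specialize (Hm y ltac:(lra)). apply Rabs_lt_between' in HM0. lra.
Qed.

Lemma lim_pinf_lower (g : R -> R) (l : R) x : is_lim g p_infty l ->
  (forall y, x <= y -> g y <= g x) -> l <= g x.
Proof.
  intros H Hm. apply le_eps. intros eps Heps.
  destruct (H (ball l (mkposreal eps Heps)) (locally_ball _ _)) as [M0 HM0].
  set (y := Rmax M0 x + 1).
  assert (M0 < y /\ x <= y) by (unfold y; generalize (Rmax_l M0 x) (Rmax_r M0 x); lra).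
  specialize (HM0 y ltac:(lra)). apply ball_R in HM0. simpl in HM0.
  specialize (Hm y ltac:(lra)). apply Rabs_lt_between' in HM0. lra.
Qed.

Lemma gen_mp_bound (g : R -> R) l lo hi :
  is_RInt_gen g (Rbar_locally m_infty) (Rbar_locally p_infty) l -> (forall a b, ex_RInt g a b) ->
  (forall a b, a <= b -> lo <= RInt g a b <= hi) -> lo <= l <= hi.
Proof.
  intros H Hex Hb.
  split; apply le_eps; intros eps Heps;
  destruct (gen_mp_approx g l H Hex eps Heps) as [M1 [M2 HM]];
  set (a := Rmin M1 M2 - 1); set (b := Rmax M1 M2 + 1);
  assert (a < M1 /\ M2 < b /\ a <= b) by (unfold a, b; generalize (Rmin_l M1 M2) (Rmin_r M1 M2) (Rmax_l M1 M2) (Rmax_r M1 M2); lra);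
  specialize (HM a b ltac:(lra) ltac:(lra)); specialize (Hb a b ltac:(lra));
  apply Rabs_lt_between' in HM; lra.
Qed.

Lemma Rabs_sub_le (a b : R) : Rabs (a - b) <= Rabs a + Rabs b.
Proof. unfold Rminus. eapply Rle_trans. apply Rabs_triang. rewrite Rabs_Ropp. lra. Qed.

Lemma f_bound f c M d K u : FT f c M d K -> 0 <= u <= 1 -> Rabs (f u) <= 2 * Rabs (c * M - d).
Proof.
  intros [_ [Hm [H0 H1]]] Hu.
  assert (A := Hm 0 u ltac:(lra) ltac:(lra) ltac:(lra)).
  assert (B' := Hm u 1 ltac:(lra) ltac:(lra) ltac:(lra)).
  unfold ftilde in *.
  assert (Rabs ((c * M - d) * u) <= Rabs (c * M - d)).
  { rewrite Rabs_mult. rewrite (Rabs_right u) by lra.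
    assert (0 <= Rabs (c * M - d)) by apply Rabs_pos. nra. }
  replace (f u) with (((c * M - d) * u + f u) - (c * M - d) * u) by ring.
  eapply Rle_trans. apply Rabs_sub_le.
  assert (Rabs ((c * M - d) * u + f u) <= Rabs (c * M - d)).
  { rewrite H1, H0 in *. rewrite Rabs_right by lra. generalize (Rle_abs (c * M - d)). lra. }
  lra.
Qed.

Lemma phistar_facts d J f cstar phistar B K c M : JH J B -> FT f c M d K -> 0 < d -> 0 < cstar ->
  tw_solution d J f cstar phistar ->
  (forall x, 0 <= phistar x <= 1) /\
  exists LD, forall x y, Rabs (phistar x - phistar y) <= LD * Rabs (x - y).
Proof.
  intros HJ HF Hd Hc [_ [Hmono [Hder [Hex [Heq [Hl1 Hl0]]]]]].
  assert (Hb : forall x, 0 <= phistar x <= 1).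
  { intros x. split.
    - apply (lim_pinf_lower phistar 0 x Hl0). intros; apply Hmono; auto.
    - apply (lim_minf_upper phistar 1 x Hl1). intros; apply Hmono; auto. }
  split; auto.
  assert (Hcont : forall x, continuous phistar x).
  { intros x. apply cont_pt. destruct (Hder x) as [l Hl]. eapply deriv_cont. exact Hl. }
  assert (HK : forall x, 0 <= int_R (fun y => J (x - y) * phistar y) <= 1).
  { intros x.
    assert (Hkc : forall y, continuous (fun y => J (x - y) * phistar y) y).
    { intros y. apply cont_mult; auto. apply (cont_comp (fun y => x - y) J).
      apply cont_minus; [apply cont_const|apply cont_id]. apply HJ. }
    apply (gen_mp_bound (fun y => J (x - y) * phistar y)).
    - unfold int_R. apply (@RInt_gen_correct R_CompleteNormedModule); [apply Proper_StrongProper, Rbar_locally_filter|apply Proper_StrongProper, Rbar_locally_filter|apply Hex].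
    - apply exRInt_cont; auto.
    - intros a b Hab. pose proof HJ as [_ [HJp _]]. split.
      + apply RInt_ge_0; auto. apply exRInt_cont; auto. intros y _. apply Rmult_le_pos; [apply HJp|apply Hb].
      + apply Rle_trans with (RInt (fun y => J (x - y)) a b).
        * apply RInt_le; auto. apply exRInt_cont; auto. apply (Jr_ex J B x HJ).
          intros y _. specialize (HJp (x - y)). specialize (Hb y).
          rewrite <- (Rmult_1_r (J (x - y))) at 2. apply Rmult_le_compat_l; lra.
        * rewrite (J_shift J B HJ). apply (J_le1 J B HJ). lra. }
  set (LD := (2 * d + 2 * Rabs (c * M - d)) / cstar).
  exists LD.
  assert (HD : forall x, Rabs (Derive phistar x) <= LD).
  { intros x. specialize (Heq x). specialize (HK x).
    assert (Hf := f_bound f c M d K (phistar x) HF (Hb x)).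
    assert (E : Derive phistar x = - (d * int_R (fun y => J (x - y) * phistar y) - d * phistar x
                 + f (phistar x)) / cstar).
    { unfold Rdiv. apply (Rmult_eq_reg_r cstar); [|lra]. rewrite Rmult_assoc, Rinv_l by lra. lra. }
    rewrite E. unfold LD. unfold Rdiv. rewrite Rabs_mult, Rabs_Ropp.
    rewrite (Rabs_right (/ cstar)) by (apply Rle_ge, Rlt_le, Rinv_0_lt_compat; lra).
    apply Rmult_le_compat_r. apply Rlt_le, Rinv_0_lt_compat; lra.
    eapply Rle_trans. apply Rabs_triang.
    eapply Rle_trans. apply Rplus_le_compat_r. apply Rabs_sub_le.
    rewrite !Rabs_mult, (Rabs_right d) by lra.
    specialize (Hb x).
    rewrite (Rabs_right (int_R _)) by lra. rewrite (Rabs_right (phistar x)) by lra.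
    nra. }
  intros x y.
  destruct (MVT_gen phistar y x (Derive phistar)) as [c0 [_ E]].
  - intros t _. apply Derive_correct. apply Hder.
  - intros t _. apply cont_pt. apply Hcont.
  - rewrite E, Rabs_mult. apply Rmult_le_compat_r. apply Rabs_pos. apply HD.
Qed.


Lemma Rmax_lip a b s : Rabs (Rmax a s - Rmax b s) <= Rabs (a - b).
Proof.
  unfold Rmax. assert (H1 := Rle_abs (a - b)). assert (H2 := Rle_abs (- (a - b))).
  rewrite Rabs_Ropp in H2.
  destruct (Rle_dec a s); destruct (Rle_dec b s); apply Rabs_le_between; split; lra.
Qed.

Lemma init_good phistar sigma LD : 0 < sigma < 1 -> phistar 0 = sigma ->
  (forall x y, x <= y -> phistar y <= phistar x) ->
  (forall x, 0 <= phistar x <= 1) ->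
  (forall x y, Rabs (phistar x - phistar y) <= LD * Rabs (x - y)) ->
  Good sigma LD (phi_sigma_init phistar sigma).
Proof.
  intros Hs H0 Hm Hb Hl. unfold phi_sigma_init. split; [|split].
  - intros x y. eapply Rle_trans. apply Rmax_lip. apply Hl.
  - intros x. specialize (Hb x). unfold Rmax. destruct (Rle_dec (phistar x) sigma); lra.
  - intros x Hx. assert (phistar x <= sigma) by (rewrite <- H0; apply Hm; auto).
    unfold Rmax. destruct (Rle_dec (phistar x) sigma); lra.
Qed.

Lemma init_sub d J f c M sigma B K cstar phistar LD x :
  0 < d -> 0 < sigma < 1 -> 0 < c -> c < cstar -> 0 < M -> JH J B -> FT f c M d K ->
  tw_solution d J f cstar phistar -> phistar 0 = sigma ->
  Good sigma LD (phi_sigma_init phistar sigma) ->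
  phi_sigma_init phistar sigma x <= A_op d J f c M sigma (phi_sigma_init phistar sigma) x.
Proof.
  intros Hd Hs Hc Hcc HM HJ HF Htw H0 Hg.
  set (u0 := phi_sigma_init phistar sigma) in *.
  pose proof Htw as [_ [Hmono [Hder [Hex [Heq [Hl1 Hl0]]]]]].
  rewrite A_op_eq. destruct (Rle_dec 0 x) as [Hx|Hx].
  { destruct Hg as [_ [_ Hg]]. rewrite Hg; auto. lra. }
  assert (Hu0 : forall y, y <= 0 -> u0 y = phistar y).
  { intros y Hy. unfold u0, phi_sigma_init. assert (sigma <= phistar y) by (rewrite <- H0; apply Hmono; auto).
    unfold Rmax. destruct (Rle_dec (phistar y) sigma); lra. }
  set (G0 := Gv d J f c M sigma u0).
  assert (HG0 : forall y, continuous G0 y) by (apply (Gv_cont d J f c M sigma B LD K u0); auto).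
  set (w := fun y => / c * RInt G0 y 0 - exp (- M * y) * phistar y).
  set (dw := fun y => / c * (- G0 y) - ((- M * exp (- M * y)) * phistar y + exp (- M * y) * Derive phistar y)).
  assert (Hdw : forall y, is_derive w y (dw y)).
  { intros y.
    assert (HR : is_derive (fun x => RInt G0 x 0) y (opp (G0 y))).
    { apply (is_derive_RInt' G0 (fun x => RInt G0 x 0) y 0).
      - apply locally_all. intros z. apply (RInt_correct G0). apply exRInt_cont; auto.
      - auto. }
    assert (HE : is_derive (fun x => exp (- M * x)) y (- M * exp (- M * y))).
    { auto_derive; auto. ring. }
    assert (HP : is_derive phistar y (Derive phistar y)) by (apply Derive_correct; apply Hder).
    assert (H1 := is_derive_scal _ y (/ c) _ HR).
    assert (H2 := is_derive_mult _ _ y _ _ HE HP ltac:(intros; apply Rmult_comm)).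
    assert (H3 := is_derive_minus _ _ y _ _ H1 H2).
    eapply is_derive_val; [eapply is_derive_ext; [|exact H3]|].
    - intros t. simpl. unfold scal, minus, plus, opp, mult; simpl. unfold mult; simpl. unfold w. Req. ring.
    - unfold dw. unfold scal, minus, plus, opp, mult; simpl. unfold mult; simpl. Req. ring. }
  destruct (MVT_gen w x 0 dw) as [c0 [Hc0 E]].
  - intros; apply Hdw.
  - intros t _. eapply deriv_cont. apply Hdw.
  - rewrite Rmin_left, Rmax_right in Hc0 by lra.
    assert (Hsign : dw c0 <= 0).
    { assert (Hc0' : c0 <= 0) by lra.
      set (e := exp (- M * c0)).
      assert (Hee : 0 < e) by apply exp_pos.
      assert (Kle : int_R (fun y => J (c0 - y) * phistar y) <= Iv J u0 c0 + sigma * a_fun J c0).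
      { assert (Hfull := full_int J B sigma LD u0 c0 HJ Hg Hs).
        assert (Hstar : is_RInt_gen (fun y => J (c0 - y) * phistar y) (Rbar_locally m_infty)
                   (Rbar_locally p_infty) (int_R (fun y => J (c0 - y) * phistar y))).
        { unfold int_R. apply (@RInt_gen_correct R_CompleteNormedModule);
            [apply Proper_StrongProper, Rbar_locally_filter|apply Proper_StrongProper, Rbar_locally_filter|apply Hex]. }
        eapply Rle_trans. apply Rle_abs.
        refine (RInt_gen_norm (V := R_CompleteNormedModule) (fun y => J (c0 - y) * phistar y) (fun y => J (c0 - y) * u0 y) _ _ _ _ Hstar Hfull).
        - apply Filter_prod with (fun a => a < 0) (fun b => 0 < b).
          simpl; exists 0; auto. simpl; exists 0; auto. intros a b Ha Hb; simpl; lra.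
        - apply Filter_prod with (fun _ => True) (fun _ => True).
          simpl; exists 0; auto. simpl; exists 0; auto. intros a b _ _ y _.
          assert (Hps := phistar_facts d J f cstar phistar B K c M HJ HF Hd ltac:(lra) Htw).
          destruct Hps as [Hb _]. pose proof HJ as [_ [HJp _]].
          change (norm (J (c0 - y) * phistar y)) with (Rabs (J (c0 - y) * phistar y)).
          rewrite Rabs_mult, Rabs_right, (Rabs_right (phistar y)) by (apply Rle_ge; apply HJp || apply Hb).
          apply Rmult_le_compat_l. apply HJp. unfold u0, phi_sigma_init. apply Rmax_l. }
      assert (Dle : Derive phistar c0 <= 0).
      { pose (pr := fun z => ex_derive_Reals_0 phistar z (Hder z)).
        rewrite <- (Derive_Reals phistar c0 (pr c0)).
        apply (nonpos_derivative_0 phistar pr). intros a b Hab. apply Hmono; auto. }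
      assert (Q : 0 <= Hv d J f c M sigma u0 c0 + c * Derive phistar c0 - c * M * phistar c0).
      { unfold Hv. rewrite (Hu0 c0 Hc0'). unfold ftilde.
        specialize (Heq c0). unfold Iv in Kle.
        assert (0 <= d * (int_minf (fun y : R => J (c0 - y) * u0 y) 0 + sigma * a_fun J c0
                         - int_R (fun y : R => J (c0 - y) * phistar y))) by (apply Rmult_le_pos; lra).
        assert (0 <= (c - cstar) * Derive phistar c0) by nra.
        lra. }
      unfold dw. fold e. unfold G0, Gv. fold e.
      assert (0 <= e / c * (Hv d J f c M sigma u0 c0 + c * Derive phistar c0 - c * M * phistar c0)).
      { apply Rmult_le_pos; auto. apply Rlt_le, Rdiv_lt_0_compat; lra. }
      replace (/ c * - (e * Hv d J f c M sigma u0 c0) - (- M * e * phistar c0 + e * Derive phistar c0))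
        with (- (e / c * (Hv d J f c M sigma u0 c0 + c * Derive phistar c0 - c * M * phistar c0)))
        by (field; lra).
      lra. }
    assert (Hw : w x >= w 0).
    { assert (dw c0 * (0 - x) <= 0) by (apply Rmult_le_0_r; lra). lra. }
    unfold w in Hw. rewrite RInt_point in Hw. unfold zero in Hw; simpl in Hw.
    replace (- M * 0) with 0 in Hw by ring. rewrite exp_0, H0 in Hw.
    rewrite (Hu0 x) by lra. unfold Fv. fold G0.
    assert (Ee := exp_inv_mul M x).
    assert (He : 0 < exp (M * x)) by apply exp_pos.
    assert (exp (M * x) * (exp (- M * x) * phistar x) <= exp (M * x) * (/ c * RInt G0 x 0 + sigma)).
    { apply Rmult_le_compat_l; lra. }
    rewrite <- Rmult_assoc, Ee in H.
    unfold Rdiv. lra.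
Qed.


Lemma grid_conv (v : nat -> R -> R) (w : R -> R) (del eps : R) : 0 < eps ->
  (forall x, is_lim_seq (fun n => v n x) (w x)) ->
  forall K : nat, exists N, forall k, (k <= K)%nat -> forall n, (N <= n)%nat ->
     Rabs (w (- (INR k * del)) - v n (- (INR k * del))) <= eps.
Proof.
  intros Heps Hl.
  assert (Hpt : forall x, exists N, forall n, (N <= n)%nat -> Rabs (w x - v n x) <= eps).
  { intros x. specialize (Hl x). apply is_lim_seq_spec in Hl.
    destruct (Hl (mkposreal eps Heps)) as [N HN]. exists N. intros n Hn.
    specialize (HN n Hn). rewrite Rabs_minus_sym. simpl in HN. lra. }
  induction K as [|K IH].
  - destruct (Hpt (- (INR 0 * del))) as [N HN]. exists N. intros k Hk n Hn.
    assert (k = 0%nat) by lia. subst. auto.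
  - destruct IH as [N1 H1]. destruct (Hpt (- (INR (S K) * del))) as [N2 H2].
    exists (Nat.max N1 N2). intros k Hk n Hn.
    destruct (Nat.eq_dec k (S K)) as [->|Hne].
    + apply H2. lia.
    + apply H1; lia.
Qed.

Lemma unif_conv (v : nat -> R -> R) (w : R -> R) L : 0 <= L ->
  (forall n x y, Rabs (v n x - v n y) <= L * Rabs (x - y)) ->
  (forall x y, Rabs (w x - w y) <= L * Rabs (x - y)) ->
  (forall x, is_lim_seq (fun n => v n x) (w x)) ->
  forall R eps, 0 < R -> 0 < eps -> exists N, forall n, (N <= n)%nat ->
    forall x, - R <= x <= 0 -> Rabs (w x - v n x) <= eps.
Proof.
  intros HL Hv Hw Hl R eps HR Heps.
  set (del := eps / (4 * (L + 1))).
  assert (Hdel : 0 < del) by (unfold del; apply Rdiv_lt_0_compat; lra).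
  assert (Hdel2 : 2 * L * del <= eps / 2).
  { unfold del. apply (Rmult_le_reg_r (4 * (L + 1))); [lra|].
    field_simplify; [nra|lra]. }
  destruct (nfloor_ex (R / del)) as [K [HK1 HK2]].
  { apply Rlt_le, Rdiv_lt_0_compat; lra. }
  destruct (grid_conv v w del (eps / 2) ltac:(lra) Hl K) as [N HN].
  exists N. intros n Hn x Hx.
  destruct (nfloor_ex (- x / del)) as [k [Hk1 Hk2]].
  { apply Rmult_le_pos; [lra| apply Rlt_le, Rinv_0_lt_compat; lra]. }
  assert (Hkd : Rabs (x - - (INR k * del)) <= del).
  { assert (INR k * del <= - x < INR k * del + del).
    { split.
      - apply (Rmult_le_compat_r del) in Hk1; [|lra]. unfold Rdiv in Hk1.
        rewrite Rmult_assoc, Rinv_l, Rmult_1_r in Hk1 by lra. lra.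
      - apply (Rmult_lt_compat_r del) in Hk2; [|lra]. unfold Rdiv in Hk2.
        rewrite Rmult_assoc, Rinv_l, Rmult_1_r in Hk2 by lra. lra. }
    apply Rabs_le_between'. lra. }
  assert (HkK : (k <= K)%nat).
  { assert (INR k < INR K + 1).
    { eapply Rle_lt_trans. apply Hk1. eapply Rle_lt_trans; [|apply HK2].
      unfold Rdiv. apply Rmult_le_compat_r. apply Rlt_le, Rinv_0_lt_compat; lra. lra. }
    rewrite <- S_INR in H. apply INR_lt in H. lia. }
  specialize (HN k HkK n Hn).
  set (g := - (INR k * del)) in *.
  assert (A1 := Hw x g). assert (A2 := Hv n g x).

  assert (L * Rabs (x - g) <= L * del) by (apply Rmult_le_compat_l; auto).
  replace (w x - v n x) with ((w x - w g) + (w g - v n g) + (v n g - v n x)) by ring.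
  eapply Rle_trans. apply Rabs_triang. eapply Rle_trans. apply Rplus_le_compat_r. apply Rabs_triang.
  rewrite (Rabs_minus_sym g x) in A2.
  lra.
Qed.

Lemma kern_abs_bound J B xi (h : R -> R) p q m : JH J B -> p <= q -> (forall y, continuous h y) ->
  (forall y, p <= y <= q -> Rabs (h y) <= m) ->
  Rabs (RInt (fun y => J (xi - y) * h y) p q) <= m * RInt J (xi - q) (xi - p).
Proof.
  intros HJ Hpq Hh Hm.
  pose proof HJ as [HJc [HJp _]].
  assert (HJr : forall y, continuous (fun y => J (xi - y)) y).
  { intro y. apply (cont_comp (fun y => xi - y) J). apply cont_minus; [apply cont_const|apply cont_id].
    apply HJc. }
  assert (Hex1 : ex_RInt (fun y => J (xi - y) * h y) p q) by (apply exRInt_cont; intros; apply cont_mult; auto).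
  assert (Hex2 : forall k, ex_RInt (fun y => k * J (xi - y)) p q)
    by (intros; apply exRInt_cont; intros; apply cont_mult; auto; apply cont_const).
  rewrite <- (J_shift J B HJ).
  assert (L1 : RInt (fun y => (- m) * J (xi - y)) p q <= RInt (fun y => J (xi - y) * h y) p q).
  { apply RInt_le; auto. intros y Hy. specialize (Hm y ltac:(lra)). specialize (HJp (xi - y)).
    apply Rabs_le_between in Hm. nra. }
  assert (L2 : RInt (fun y => J (xi - y) * h y) p q <= RInt (fun y => m * J (xi - y)) p q).
  { apply RInt_le; auto. intros y Hy. specialize (Hm y ltac:(lra)). specialize (HJp (xi - y)).
    apply Rabs_le_between in Hm. nra. }
  rewrite RInt_scal_R in L1, L2 by (apply exRInt_cont; auto).
  apply Rabs_le_between. lra.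
Qed.

Lemma Iv_conv J B sigma L1 L2 phi psi xi Rr eps eta T : JH J B -> Good sigma L1 phi -> Good sigma L2 psi ->
  0 <= Rr -> 0 <= eps ->
  (forall y, - Rr <= y <= 0 -> Rabs (psi y - phi y) <= eps) ->
  (forall b b', T <= b -> b <= b' -> RInt J b b' <= eta) -> T <= xi + Rr ->
  Rabs (Iv J psi xi - Iv J phi xi) <= eps + eta.
Proof.
  intros HJ Hp Hq HR He Hc Ht HT.
  assert (Hkp := kern_ex J B sigma L1 phi xi HJ Hp).
  assert (Hkq := kern_ex J B sigma L2 psi xi HJ Hq).
  assert (Hhc : forall y, continuous (fun y => psi y - phi y) y).
  { intros y. apply cont_minus. apply (lip_cont psi L2), Hq. apply (lip_cont phi L1), Hp. }
  assert (Hd : forall a, a < - Rr ->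
     Rabs (RInt (fun y => J (xi - y) * psi y) a 0 - RInt (fun y => J (xi - y) * phi y) (a + 0) 0) <= eps + eta).
  { intros a Ha. rewrite Rplus_0_r.
    assert (E : @eq R (RInt (fun y => J (xi - y) * psi y) a 0 - RInt (fun y => J (xi - y) * phi y) a 0)
                  (RInt (fun y => J (xi - y) * (psi y - phi y)) a (- Rr) +
                   RInt (fun y => J (xi - y) * (psi y - phi y)) (- Rr) 0)).
    { rewrite <- RInt_Chasles_R.
      - rewrite <- (RInt_minus (fun y => J (xi - y) * psi y)) by auto.
        apply RInt_ext. intros. unfold minus, plus, opp; simpl. Req. ring.
      - apply exRInt_cont. intros. apply cont_mult; auto. apply (cont_comp (fun y => xi - y) J).
        apply cont_minus; [apply cont_const|apply cont_id]. apply HJ.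
      - apply exRInt_cont. intros. apply cont_mult; auto. apply (cont_comp (fun y => xi - y) J).
        apply cont_minus; [apply cont_const|apply cont_id]. apply HJ. }
    rewrite E.
    assert (B1 := kern_abs_bound J B xi (fun y => psi y - phi y) a (- Rr) 1 HJ ltac:(lra) Hhc).
    assert (B2 := kern_abs_bound J B xi (fun y => psi y - phi y) (- Rr) 0 eps HJ ltac:(lra) Hhc Hc).
    assert (B1' : Rabs (RInt (fun y => J (xi - y) * (psi y - phi y)) a (- Rr)) <= eta).
    { eapply Rle_trans. apply B1.
      - intros y _. destruct Hp as [_ [Hp _]]. destruct Hq as [_ [Hq _]].
        specialize (Hp y). specialize (Hq y). apply Rabs_le_between. lra.
      - rewrite Rmult_1_l. apply Ht; lra. }
    assert (B2' : Rabs (RInt (fun y => J (xi - y) * (psi y - phi y)) (- Rr) 0) <= eps).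
    { eapply Rle_trans. apply B2.
      assert (0 <= RInt J (xi - 0) (xi - - Rr) <= 1).
      { split; [apply (J_ge0 J B HJ)|apply (J_le1 J B HJ)]; lra. }
      rewrite <- (Rmult_1_r eps) at 2. apply Rmult_le_compat_l; lra. }
    eapply Rle_trans. apply Rabs_triang. lra. }
  apply Rabs_le_between'. split.
  - cut (Iv J phi xi - Iv J psi xi <= eps + eta). lra.
    apply (gen_left_diff _ _ 0 0 _ _ 0 _ (Iv_is J B sigma L1 phi xi HJ Hp) (Iv_is J B sigma L2 psi xi HJ Hq)
             (fun a => Hkp a 0) (fun a => Hkq a 0)).
    exists (- Rr). intros a Ha. specialize (Hd a Ha). rewrite Rplus_0_r in *.
    apply Rabs_le_between' in Hd. lra.
  - cut (Iv J psi xi - Iv J phi xi <= eps + eta). lra.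
    apply (gen_left_diff _ _ 0 0 _ _ 0 _ (Iv_is J B sigma L2 psi xi HJ Hq) (Iv_is J B sigma L1 phi xi HJ Hp)
             (fun a => Hkq a 0) (fun a => Hkp a 0)).
    exists (- Rr). intros a Ha. specialize (Hd a Ha).
    apply Rabs_le_between' in Hd. lra.
Qed.

Lemma A_diff_bound d J f c M sigma B L1 L2 K phi psi x beta :
  0 < d -> 0 < sigma < 1 -> 0 < c -> 0 < M -> JH J B -> FT f c M d K ->
  Good sigma L1 phi -> Good sigma L2 psi -> x < 0 ->
  (forall xi, x <= xi <= 0 -> Rabs (Hv d J f c M sigma psi xi - Hv d J f c M sigma phi xi) <= beta) ->
  Rabs (A_op d J f c M sigma psi x - A_op d J f c M sigma phi x) <= (- x) * beta / c.
Proof.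
  intros Hd Hs Hc HM HJ HF Hp Hq Hx Hb.
  rewrite !A_op_eq. destruct (Rle_dec 0 x); [lra|].
  unfold Fv.
  assert (Hgp := Gv_cont d J f c M sigma B L1 K phi Hd Hs HJ HF Hp).
  assert (Hgq := Gv_cont d J f c M sigma B L2 K psi Hd Hs HJ HF Hq).
  assert (E : @eq R (RInt (Gv d J f c M sigma psi) x 0 - RInt (Gv d J f c M sigma phi) x 0)
              (RInt (fun t => exp (- M * t) * (Hv d J f c M sigma psi t - Hv d J f c M sigma phi t)) x 0)).
  { rewrite <- (RInt_minus (Gv d J f c M sigma psi)) by (apply exRInt_cont; auto).
    apply RInt_ext. intros. unfold minus, plus, opp, Gv; simpl. Req. ring. }
  assert (Hbeta : 0 <= beta) by (eapply Rle_trans; [apply Rabs_pos|apply (Hb x); lra]).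
  assert (HI : Rabs (RInt (fun t => exp (- M * t) * (Hv d J f c M sigma psi t - Hv d J f c M sigma phi t)) x 0)
               <= (0 - x) * (exp (- M * x) * beta)).
  { apply abs_RInt_le_const; [lra| |].
    - apply exRInt_cont. intros. apply cont_mult. apply cont_exp. apply cont_minus.
      apply (Hv_cont d J f c M sigma B L2 K psi); auto.
      apply (Hv_cont d J f c M sigma B L1 K phi); auto.
    - intros t Ht. rewrite Rabs_mult, Rabs_right by (apply Rle_ge, Rlt_le, exp_pos).
      apply Rmult_le_compat; [apply Rlt_le, exp_pos|apply Rabs_pos| |apply Hb; lra].
      destruct (Rle_lt_or_eq_dec _ _ (proj1 Ht)) as [Hlt|Heq].
      + apply Rlt_le, exp_increasing. nra.
      + subst; lra. }
  rewrite <- E in HI.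
  replace (exp (M * x) * sigma + exp (M * x) / c * RInt (Gv d J f c M sigma psi) x 0 -
          (exp (M * x) * sigma + exp (M * x) / c * RInt (Gv d J f c M sigma phi) x 0))
    with (exp (M * x) / c * (RInt (Gv d J f c M sigma psi) x 0 - RInt (Gv d J f c M sigma phi) x 0)) by ring.
  rewrite Rabs_mult. rewrite (Rabs_right (exp (M * x) / c)) by (apply Rle_ge, Rlt_le, Rdiv_lt_0_compat; [apply exp_pos|lra]).
  assert (He := exp_inv_mul M x).
  apply Rle_trans with (exp (M * x) / c * ((0 - x) * (exp (- M * x) * beta))).
  { apply Rmult_le_compat_l; auto. apply Rlt_le, Rdiv_lt_0_compat; [apply exp_pos|lra]. }
  replace (exp (M * x) / c * ((0 - x) * (exp (- M * x) * beta))) with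
     ((exp (M * x) * exp (- M * x)) * ((- x) * beta / c)) by (field; lra).
  rewrite He. lra.
Qed.


Lemma Good_weaken sigma L L' phi : L <= L' -> Good sigma L phi -> Good sigma L' phi.
Proof.
  intros HL [Hl Hr]. split; auto. intros x y. eapply Rle_trans. apply Hl.
  apply Rmult_le_compat_r; auto. apply Rabs_pos.
Qed.

Lemma lim_between (v : nat -> R) (l lo hi : R) : is_lim_seq v l -> (forall n, lo <= v n <= hi) -> lo <= l <= hi.
Proof.
  intros H Hb. split.
  - assert (Hh := is_lim_seq_le (fun _ => lo) v lo l (fun n => proj1 (Hb n)) (is_lim_seq_const lo) H).
    simpl in Hh. exact Hh.
  - assert (Hh := is_lim_seq_le v (fun _ => hi) l hi (fun n => proj2 (Hb n)) H (is_lim_seq_const hi)).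
    simpl in Hh. exact Hh.
Qed.

Lemma limit_good (v : nat -> R -> R) (w : R -> R) sigma L :
  (forall n, Good sigma L (v n)) -> (forall x, is_lim_seq (fun n => v n x) (w x)) -> Good sigma L w.
Proof.
  intros Hg Hl. split; [|split].
  - intros x y.
    assert (H := lim_between _ _ (- (L * Rabs (x - y))) (L * Rabs (x - y)) (is_lim_seq_minus' _ _ _ _ (Hl x) (Hl y))).
    apply Rabs_le_between. apply H. intros n. destruct (Hg n) as [Hn _]. specialize (Hn x y).
    apply Rabs_le_between in Hn. exact Hn.
  - intros x. apply (lim_between _ _ 0 1 (Hl x)). intros n. apply (Hg n).
  - intros x Hx. assert (H := lim_between _ _ sigma sigma (Hl x)).
    assert (sigma <= w x <= sigma); [|lra]. apply H. intros n. destruct (Hg n) as [_ [_ Hn]].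
    rewrite Hn by auto. lra.
Qed.

Lemma div_le (a b c : R) : 0 < b -> a <= c * b -> a / b <= c.
Proof.
  intros Hb H. unfold Rdiv. apply (Rmult_le_reg_r b); auto.
  rewrite Rmult_assoc, Rinv_l, Rmult_1_r by lra. lra.
Qed.

Theorem lemma2p1 (d : R) (J f : R -> R) (cstar sigma c M : R) (phistar : R -> R) :
  0 < d -> cond_J J -> cond_J2 J -> cond_f3 f ->
  0 < cstar -> minimal_speed d J f cstar ->
  0 < sigma < 1 -> 0 < c < cstar ->
  0 < M ->
  (forall u v, 0 <= u -> u < v -> v <= 1 -> ftilde f c M d u < ftilde f c M d v) ->
  tw_solution d J f cstar phistar -> phistar 0 = sigma ->
  exists phis : R -> R,
    (forall x, is_lim_seq
        (fun n => Nat.iter n (A_op d J f c M sigma) (phi_sigma_init phistar sigma) x)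
        (phis x)) /\
    (forall x, x < 0 -> ex_derive phis x /\ continuous (Derive phis) x) /\
    (forall x, x < 0 ->
        ex_int_R (fun y => J (x - y) * phis y) /\
        d * int_R (fun y => J (x - y) * phis y) - d * phis x
          + c * Derive phis x + f (phis x) = 0) /\
    is_lim phis m_infty 1 /\
    (forall x, 0 <= x -> phis x = sigma) /\
    (forall x, 0 <= phis x <= 1).
Proof.
  intros Hd HJc _ Hf Hcs _ Hs Hc HM Hmono Htw H0.
  destruct HJc as [Jc [[B HB] [Jp [_ [Jint _]]]]].
  assert (HJ : JH J B).
  { split; [auto|split; [|auto]]. intros x. split; auto. specialize (HB x).
    rewrite Rabs_right in HB by (apply Rle_ge, Jp). auto. }
  destruct (ftilde_props f c M d Hf Hmono) as [K [HK [Hm [Hf0 Hf1]]]].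
  assert (HF : FT f c M d K) by (split; [auto|split; [auto|split; auto]]).
  destruct (phistar_facts d J f cstar phistar B K c M HJ HF Hd Hcs Htw) as [Hpb [LD HLD]].
  pose proof Htw as [_ [Hpm _]].
  assert (Hg0 := init_good phistar sigma LD Hs H0 Hpm Hpb HLD).
  assert (Hc0 : 0 < c) by lra.
  set (u0 := phi_sigma_init phistar sigma) in *.
  set (T := A_op d J f c M sigma).
  set (u := fun n => Nat.iter n T u0).
  set (Lg := Rmax LD M).
  assert (Hgood : forall n, Good sigma Lg (u n)).
  { induction n as [|n IH].
    - apply (Good_weaken sigma LD); [apply Rmax_l|exact Hg0].
    - apply (Good_weaken sigma M); [apply Rmax_r|].
      change (u (S n)) with (T (u n)).
      apply (A_op_good d J f c M sigma B Lg K); auto. }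
  assert (Hincr : forall n x, u n x <= u (S n) x).
  { induction n as [|n IH]; intros x.
    - apply (init_sub d J f c M sigma B K cstar phistar LD x); auto; lra.
    - change (u (S (S n)) x) with (T (u (S n)) x). change (u (S n) x) with (T (u n) x).
      apply (A_op_mono d J f c M sigma B Lg Lg K); auto. }
  assert (Hexl : forall x, ex_finite_lim_seq (fun n => u n x)).
  { intros x. apply (ex_finite_lim_seq_incr _ 1). intros; apply Hincr.
    intros n. destruct (Hgood n) as [_ [Hb _]]. apply Hb. }
  set (phis := fun x => real (Lim_seq (fun n => u n x))).
  assert (Hlim : forall x, is_lim_seq (fun n => u n x) (phis x)).
  { intros x. unfold phis. assert (H := Lim_seq_correct' _ (Hexl x)). exact H. }
  assert (Hpg : Good sigma Lg phis) by (apply (limit_good u); auto).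
  assert (Hle : forall n x, u n x <= phis x).
  { intros n x. apply (is_lim_seq_incr_compare (fun n => u n x)); auto. }
  assert (HLg : 0 <= Lg) by (unfold Lg; generalize (Rmax_r LD M); lra).
  assert (Hfix : forall x, x < 0 -> T phis x = phis x).
  { intros x Hx.
    assert (HL1 : is_lim_seq (fun n => T (u n) x) (phis x)).
    { assert (H := Hlim x). apply (is_lim_seq_incr_1 (fun n => u n x)) in H. exact H. }
    assert (HL2 : is_lim_seq (fun n => T (u n) x) (T phis x)).
    { apply is_lim_seq_spec. intros eps.
      set (tau := eps / 2).
      assert (Htau : 0 < tau) by (unfold tau; generalize (cond_pos eps); lra).
      set (Cst := 2 * d + K + 1).
      assert (HCst : 0 < Cst) by (unfold Cst; lra).
      set (e := tau * c / (Cst * (- x + 1))).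
      assert (He : 0 < e).
      { unfold e. apply Rdiv_lt_0_compat. nra. apply Rmult_lt_0_compat; lra. }
      destruct (J_right_tail J B HJ e He) as [Tt HTt].
      set (Rr := Rmax (- x) (Tt - x) + 1).
      assert (HRr : 0 <= Rr /\ - Rr <= x /\ Tt - x <= Rr).
      { unfold Rr. generalize (Rmax_l (- x) (Tt - x)) (Rmax_r (- x) (Tt - x)). lra. }
      destruct (unif_conv u phis Lg HLg (fun n => proj1 (Hgood n)) (proj1 Hpg) Hlim Rr e
                   ltac:(lra) He) as [N HN].
      exists N. intros n Hn.
      assert (Hb : forall xi, x <= xi <= 0 ->
         Rabs (Hv d J f c M sigma phis xi - Hv d J f c M sigma (u n) xi) <= (2 * d + K) * e).
      { intros xi Hxi.
        assert (I := Iv_conv J B sigma Lg Lg (u n) phis xi Rr e e Tt HJ (Hgood n) Hpg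
                   ltac:(lra) ltac:(lra) (fun y Hy => HN n Hn y Hy) HTt ltac:(lra)).
        assert (Hun : 0 <= u n xi <= 1) by (apply (Hgood n)).
        assert (Hph : 0 <= phis xi <= 1) by (apply Hpg).
        assert (F := ft_lip f c M d K (u n xi) (phis xi) HF Hun Hph).
        assert (U := HN n Hn xi ltac:(lra)).
        unfold Hv. unfold Iv in I.
        set (I1 := int_minf (fun y : R => J (xi - y) * phis y) 0) in *.
        set (I0 := int_minf (fun y : R => J (xi - y) * u n y) 0) in *.
        assert (K * Rabs (phis xi - u n xi) <= K * e) by (apply Rmult_le_compat_l; auto).
        apply Rabs_le_between in I. apply Rabs_le_between in F.
        assert (d * (I1 - I0) <= d * (e + e)) by (apply Rmult_le_compat_l; lra).
        assert (d * (- (e + e)) <= d * (I1 - I0)) by (apply Rmult_le_compat_l; lra).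
        apply Rabs_le_between. split; lra. }
      assert (A := A_diff_bound d J f c M sigma B Lg Lg K (u n) phis x ((2 * d + K) * e)
                     Hd Hs Hc0 HM HJ HF (Hgood n) Hpg Hx Hb).
      fold T in A. rewrite Rabs_minus_sym.
      eapply Rle_lt_trans. apply A.
      assert (E : - x * ((2 * d + K) * e) / c = tau * ((- x) * (2 * d + K)) / (Cst * (- x + 1))).
      { unfold e. field. split; lra. }
      rewrite E.
      assert (tau * (- x * (2 * d + K)) / (Cst * (- x + 1)) <= tau).
      { apply div_le. apply Rmult_lt_0_compat; lra.
        assert (- x * (2 * d + K) <= Cst * (- x + 1)) by (unfold Cst; nra).
        nra. }
      unfold tau in *. generalize (cond_pos eps). lra. }
    assert (E1 := is_lim_seq_unique _ _ HL1).
    assert (E2 := is_lim_seq_unique _ _ HL2).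
    rewrite E1 in E2. injection E2. auto. }
  assert (Hdpos : forall x, x < 0 ->
            is_derive phis x (M * phis x - Hv d J f c M sigma phis x / c)).
  { intros x Hx.
    assert (HD := Fv_deriv d J f c M sigma B Lg K phis Hd Hs Hc0 HJ HF Hpg x).
    assert (Ex : Fv d J f c M sigma phis x = phis x).
    { rewrite <- (Hfix x Hx). unfold T. rewrite A_op_eq. destruct (Rle_dec 0 x); [lra|auto]. }
    rewrite Ex in HD.
    apply (is_derive_ext_loc (Fv d J f c M sigma phis)); auto.
    exists (mkposreal (- x) ltac:(lra)). intros t Ht.
    assert (Ht' : Rabs (t - x) < - x) by exact Ht.
    assert (t < 0) by (apply Rabs_lt_between' in Ht'; lra).
    rewrite <- (Hfix t) by auto. unfold T. rewrite A_op_eq. destruct (Rle_dec 0 t); [lra|auto]. }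
  assert (Hphc : forall x, continuous phis x) by (apply (lip_cont phis Lg); apply Hpg).
  exists phis. split; [|split; [|split; [|split; [|split]]]].
  - intros x. exact (Hlim x).
  - intros x Hx. split.
    + eexists. apply Hdpos; auto.
    + apply (@continuous_ext_loc R_UniformSpace R_UniformSpace (Derive phis) (fun t => M * phis t - Hv d J f c M sigma phis t / c) x).
      * exists (mkposreal (- x) ltac:(lra)). intros t Ht.
        assert (Ht' : Rabs (t - x) < - x) by exact Ht.
        assert (t < 0) by (apply Rabs_lt_between' in Ht'; lra).
        symmetry. apply is_derive_unique. apply Hdpos; auto.
      * apply cont_minus. apply cont_mult; [apply cont_const|auto].
        unfold Rdiv. apply cont_mult; [|apply cont_const].
        apply (Hv_cont d J f c M sigma B Lg K phis); auto.
  - intros x Hx.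
    assert (HI := full_int J B sigma Lg phis x HJ Hpg Hs).
    split.
    + eexists. exact HI.
    + unfold int_R. rewrite (is_RInt_gen_unique _ _ HI).
      rewrite (is_derive_unique _ _ _ (Hdpos x Hx)).
      unfold Hv, Iv, ftilde. field. lra.
  - apply (is_lim_le_le_loc phistar (fun _ => 1) phis m_infty 1).
    + exists 0. intros y Hy. split.
      * apply Rle_trans with (u0 y). unfold u0, phi_sigma_init. apply Rmax_l.
        apply (Hle 0%nat y).
      * apply Hpg.
    + destruct Htw as [_ [_ [_ [_ [_ [Hl1 _]]]]]]. exact Hl1.
    + apply is_lim_const.
  - apply Hpg.
  - apply Hpg.
Qed.
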